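(* Let $\mathcal C$ be the class of ultimately periodic traces or the class of ultimately constant traces. Then countable satisfiability, $\mathcal C$-restricted satisfiability and $\mathcal C$-restricted finite satisfiability of $\mathrm{LTL}(\sim)$ are logspace-reducible to $\mathbf{\Delta^2_0}$.
   Context: Let $\mathrm{AP}$ be a countably infinite set of atomic propositions. A trace is an infinite sequence $t=t(0)t(1)\cdots\in(\wp\mathrm{AP})^\omega$, and $t^i=t(i)t(i+1)\cdots$. A team is a (possibly empty) set $T$ of traces, and $T^i=\{t^i: t\in T\}$. Formulas of $\mathrm{LTL}(\sim)$ are given by $\varphi::=p\mid\neg\varphi\mid\varphi\wedge\varphi\mid\varphi\vee\varphi\mid\mathsf X\varphi\mid\mathsf F\varphi\mid\mathsf G\varphi\mid\varphi\,\mathsf U\,\varphi\mid\varphi\,\mathsf R\,\varphi\mid{\sim}\varphi$ with $p\in\mathrm{AP}$. Synchronous team semantics: $T\models p$ iff $p\in t(0)$ for all $t\in T$; $T\models\neg\varphi$ iff $\{t\}\not\models\varphi$ for all $t\in T$; $T\models\varphi\wedge\psi$ iff $T\models\varphi$ and $T\models\psi$; $T\models\varphi\vee\psi$ iff $T=S\cup U$ for some $S,U$ with $S\models\varphi$ and $U\models\psi$; $T\models\mathsf X\varphi$ iff $T^1\models\varphi$; $T\models\mathsf F\varphi$ iff $T^k\models\varphi$ for some $k\ge0$; $T\models\mathsf G\varphi$ iff $T^k\models\varphi$ for all $k\ge0$; $T\models\varphi\,\mathsf U\,\psi$ iff there is $k\ge0$ with $T^k\models\psi$ and $T^j\models\varphi$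 for all $j<k$; $T\models\varphi\,\mathsf R\,\psi$ iff for all $k\ge0$, $T^k\models\psi$ or $T^j\models\varphi$ for some $j<k$; $T\models{\sim}\varphi$ iff $T\not\models\varphi$. A finite Kripke structure is $K=(W,R,\eta,r)$ with $W$ finite nonempty, $R\subseteq W\times W$ serial, $\eta:W\to\wp\mathrm{AP}$ with finite labels, and root $r\in W$; a path is $\pi\in W^\omega$ with $\pi(0)=r$ and $(\pi(i),\pi(i+1))\in R$; it induces the trace $(\eta(\pi(i)))_{i\ge0}$; $T(K)$ is the team of all induced traces. A trace $t$ is ultimately periodic if there are $c,d>0$ with $t(n)=t(n+d)$ for all $n\ge c$, and ultimately constant if some suffix $t^i$ is constant. Countable satisfiability: formulas satisfied by some countable team. For a class $\mathcal C$ of traces, $\mathcal C$-restricted satisfiability is the set of $\varphi$ such that $T\cap\mathcal C\models\varphi$ for some team $T$; $\mathcal C$-restricted finite satisfiability is the set of $\varphi$ such that $T(K)\cap\mathcal C\models\varphi$ for some finite Kripke structure $K$. $\mathbf{\Delta^2_0}$ denotes the set of closed formulas of second-order arithmetic (vocabulary $+,\times,0,1,=,\le$; first-order variables over $\mathbb N$, second-order variables of arity $n$ over subsets of $\mathbb N^n$) true in the standard model $\mathbb N$. *)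

(* Defs.v *)
From Stdlib Require Import Arith List PArith Bool.
Import ListNotations.

Definition trace := nat -> nat -> bool.   (* t i p = true  <->  p \in t(i) *)
Definition team := trace -> Prop.

Definition suffix (t : trace) (k : nat) : trace := fun n => t (k + n).
Definition team_shift (T : team) (k : nat) : team :=
  fun s => exists t, T t /\ s = suffix t k.
Definition singleton (t : trace) : team := fun s => s = t.

Inductive ltl : Type :=
| LAtom : nat -> ltl
| LNeg : ltl -> ltl
| LAnd : ltl -> ltl -> ltl
| LOr : ltl -> ltl -> ltl
| LX : ltl -> ltl
| LF : ltl -> ltl
| LG : ltl -> ltl
| LU : ltl -> ltl -> ltl
| LR : ltl -> ltl -> ltl
| LTilde : ltl -> ltl.

Fixpoint tsat (phi : ltl) (T : team) {struct phi} : Prop :=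
  match phi with
  | LAtom p => forall t, T t -> t 0 p = true
  | LNeg f => forall t, T t -> ~ tsat f (singleton t)
  | LAnd f g => tsat f T /\ tsat g T
  | LOr f g => exists S U : team, (forall t, T t <-> S t \/ U t) /\ tsat f S /\ tsat g U
  | LX f => tsat f (team_shift T 1)
  | LF f => exists k, tsat f (team_shift T k)
  | LG f => forall k, tsat f (team_shift T k)
  | LU f g => exists k, tsat g (team_shift T k) /\ forall j, j < k -> tsat f (team_shift T j)
  | LR f g => forall k, tsat g (team_shift T k) \/ exists j, j < k /\ tsat f (team_shift T j)
  | LTilde f => ~ tsat f T
  end.

Record kripke := mkKripke {
  kW : nat;
  kR : nat -> nat -> bool;
  keta : nat -> nat -> bool;     (* labelling: keta w p = true <-> p \in eta(w) *)
  kroot : nat }.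

Definition wf_kripke (K : kripke) : Prop :=
  0 < kW K /\ kroot K < kW K /\
  (forall w, w < kW K -> exists v, v < kW K /\ kR K w v = true) /\
  (exists B, forall w p, w < kW K -> keta K w p = true -> p < B).

Definition kpath (K : kripke) (pi : nat -> nat) : Prop :=
  pi 0 = kroot K /\ forall i, pi i < kW K /\ kR K (pi i) (pi (S i)) = true.

Definition teamK (K : kripke) : team :=
  fun t => exists pi, kpath K pi /\ t = (fun i => keta K (pi i)).

Definition ult_periodic (t : trace) : Prop :=
  exists c d, 0 < c /\ 0 < d /\ forall n, c <= n -> t n = t (n + d).

Definition ult_constant (t : trace) : Prop :=
  exists i, forall n, t (i + n) = t i.

Definition countable_team (T : team) : Prop :=
  exists f : nat -> trace, forall t, T t -> exists n, f n = t.

Definition CountSat (phi : ltl) : Prop :=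
  exists T, countable_team T /\ tsat phi T.

Definition CSat (C : trace -> Prop) (phi : ltl) : Prop :=
  exists T : team, tsat phi (fun t => T t /\ C t).

Definition CFinSat (C : trace -> Prop) (phi : ltl) : Prop :=
  exists K, wf_kripke K /\ tsat phi (fun t => teamK K t /\ C t).

Inductive term : Type :=
| TVar : nat -> term
| TZero : term
| TOne : term
| TAdd : term -> term -> term
| TMul : term -> term -> term.

(* second-order variable = (name j, arity n) *)
Inductive sform : Type :=
| SEq : term -> term -> sform
| SLe : term -> term -> sform
| SMem : nat -> nat -> list term -> sform
| SNeg : sform -> sform
| SAnd : sform -> sform -> sform
| SOr : sform -> sform -> sform
| SEx1 : nat -> sform -> sform
| SAll1 : nat -> sform -> sform
| SEx2 : nat -> nat -> sform -> sform
| SAll2 : nat -> nat -> sform -> sform.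

Fixpoint teval (e : nat -> nat) (t : term) : nat :=
  match t with
  | TVar i => e i
  | TZero => 0
  | TOne => 1
  | TAdd a b => teval e a + teval e b
  | TMul a b => teval e a * teval e b
  end.

Definition upd1 (e : nat -> nat) (i v : nat) : nat -> nat :=
  fun i' => if Nat.eqb i' i then v else e i'.
Definition upd2 (e : nat -> nat -> list nat -> Prop) (j n : nat) (X : list nat -> Prop)
  : nat -> nat -> list nat -> Prop :=
  fun j' n' => if Nat.eqb j' j && Nat.eqb n' n then X else e j' n'.

(* second-order variables of arity n range over all subsets of N^n, represented as
   predicates on lists (only lists of length n are ever queried in closed formulas) *)
Fixpoint sholds (e1 : nat -> nat) (e2 : nat -> nat -> list nat -> Prop) (f : sform)
  {struct f} : Prop :=
  match f with
  | SEq a b => teval e1 a = teval e1 b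
  | SLe a b => teval e1 a <= teval e1 b
  | SMem j n ts => e2 j n (map (teval e1) ts)
  | SNeg g => ~ sholds e1 e2 g
  | SAnd g h => sholds e1 e2 g /\ sholds e1 e2 h
  | SOr g h => sholds e1 e2 g \/ sholds e1 e2 h
  | SEx1 i g => exists v, sholds (upd1 e1 i v) e2 g
  | SAll1 i g => forall v, sholds (upd1 e1 i v) e2 g
  | SEx2 j n g => exists X, sholds e1 (upd2 e2 j n X) g
  | SAll2 j n g => forall X, sholds e1 (upd2 e2 j n X) g
  end.

Fixpoint term_closed (B : list nat) (t : term) : Prop :=
  match t with
  | TVar i => In i B
  | TZero | TOne => True
  | TAdd a b | TMul a b => term_closed B a /\ term_closed B b
  end.

(* syntactic closedness (plus arity well-formedness of atoms) *)
Fixpoint sclosed (B1 : list nat) (B2 : list (nat * nat)) (f : sform) : Prop :=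
  match f with
  | SEq a b | SLe a b => term_closed B1 a /\ term_closed B1 b
  | SMem j n ts => In (j, n) B2 /\ length ts = n /\ Forall (term_closed B1) ts
  | SNeg g => sclosed B1 B2 g
  | SAnd g h | SOr g h => sclosed B1 B2 g /\ sclosed B1 B2 h
  | SEx1 i g | SAll1 i g => sclosed (i :: B1) B2 g
  | SEx2 j n g | SAll2 j n g => sclosed B1 ((j, n) :: B2) g
  end.

Definition Delta20 (f : sform) : Prop :=
  sclosed [] [] f /\ sholds (fun _ => 0) (fun _ _ _ => False) f.

Fixpoint enc_pos (p : positive) : list bool :=
  match p with
  | xH => []
  | xO q => [true; false] ++ enc_pos q
  | xI q => [true; true] ++ enc_pos q
  end.

(* numbers in binary (LSB first, bits doubled), self-delimiting *)
Definition enc_nat (n : nat) : list bool :=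
  match n with
  | O => [false; true]
  | S _ => enc_pos (Pos.of_nat n) ++ [false; false]
  end.

Definition tag (k : nat) : list bool :=
  [Nat.testbit k 0; Nat.testbit k 1; Nat.testbit k 2; Nat.testbit k 3].

Fixpoint enc_ltl (f : ltl) : list bool :=
  match f with
  | LAtom p => tag 0 ++ enc_nat p
  | LNeg g => tag 1 ++ enc_ltl g
  | LAnd g h => tag 2 ++ enc_ltl g ++ enc_ltl h
  | LOr g h => tag 3 ++ enc_ltl g ++ enc_ltl h
  | LX g => tag 4 ++ enc_ltl g
  | LF g => tag 5 ++ enc_ltl g
  | LG g => tag 6 ++ enc_ltl g
  | LU g h => tag 7 ++ enc_ltl g ++ enc_ltl h
  | LR g h => tag 8 ++ enc_ltl g ++ enc_ltl h
  | LTilde g => tag 9 ++ enc_ltl g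
  end.

Fixpoint enc_term (t : term) : list bool :=
  match t with
  | TVar i => tag 0 ++ enc_nat i
  | TZero => tag 1
  | TOne => tag 2
  | TAdd a b => tag 3 ++ enc_term a ++ enc_term b
  | TMul a b => tag 4 ++ enc_term a ++ enc_term b
  end.

Fixpoint enc_sform (f : sform) : list bool :=
  match f with
  | SEq a b => tag 0 ++ enc_term a ++ enc_term b
  | SLe a b => tag 1 ++ enc_term a ++ enc_term b
  | SMem j n ts => tag 2 ++ enc_nat j ++ enc_nat n ++ enc_nat (length ts)
                     ++ flat_map enc_term ts
  | SNeg g => tag 3 ++ enc_sform g
  | SAnd g h => tag 4 ++ enc_sform g ++ enc_sform h
  | SOr g h => tag 5 ++ enc_sform g ++ enc_sform h
  | SEx1 i g => tag 6 ++ enc_nat i ++ enc_sform g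
  | SAll1 i g => tag 7 ++ enc_nat i ++ enc_sform g
  | SEx2 j n g => tag 8 ++ enc_nat j ++ enc_nat n ++ enc_sform g
  | SAll2 j n g => tag 9 ++ enc_nat j ++ enc_nat n ++ enc_sform g
  end.

Definition lang_ltl (P : ltl -> Prop) : list bool -> Prop :=
  fun w => exists f, w = enc_ltl f /\ P f.
Definition lang_sform (P : sform -> Prop) : list bool -> Prop :=
  fun w => exists f, w = enc_sform f /\ P f.

(*  read-only input tape with endmarkers (positions 0..|w|+1),         *)
(*  one read/write work tape over {0..nG-1} (blank 0),                 *)
Inductive Sym := LEnd | REnd | Bit (b : bool).
Inductive Dir := DL | DS | DR.

Record LTM := mkLTM {
  nQ : nat;
  nG : nat;
  q0 : nat;
  halting : nat -> bool;
  delta : nat -> Sym -> nat -> (nat * Dir * nat * Dir * option bool) }.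
  (* delta q a g = (q', input move, written work symbol, work move, output) *)

Definition wf_LTM (M : LTM) : Prop :=
  0 < nG M /\ q0 M < nQ M /\
  forall q s g, q < nQ M -> g < nG M ->
    match delta M q s g with (q', _, g', _, _) => q' < nQ M /\ g' < nG M end.

Record cfg := mkCfg { cq : nat; ci : nat; ctape : nat -> nat; cj : nat; cout : list bool }.

Definition read_in (w : list bool) (i : nat) : Sym :=
  match i with
  | O => LEnd
  | S i' => match nth_error w i' with Some b => Bit b | None => REnd end
  end.

Definition move_in (n i : nat) (d : Dir) : nat :=
  match d with DL => pred i | DS => i | DR => Nat.min (S i) (S n) end.

Definition move_w (j : nat) (d : Dir) : nat :=
  match d with DL => pred j | DS => j | DR => S j end.

Definition init_cfg (M : LTM) : cfg := mkCfg (q0 M) 0 (fun _ => 0) 0 [].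

Definition step (M : LTM) (w : list bool) (c : cfg) : cfg :=
  if halting M (cq c) then c else
  match delta M (cq c) (read_in w (ci c)) (ctape c (cj c)) with
  | (q', di, g, dw, o) =>
      mkCfg q' (move_in (length w) (ci c) di)
            (fun x => if Nat.eqb x (cj c) then g else ctape c x)
            (move_w (cj c) dw)
            (cout c ++ match o with Some b => [b] | None => [] end)
  end.

Definition run (M : LTM) (w : list bool) (k : nat) : cfg :=
  Nat.iter k (step M w) (init_cfg M).

Definition logspace_computable (f : list bool -> list bool) : Prop :=
  exists (M : LTM) (c : nat), wf_LTM M /\
    forall w,
      (exists k, halting M (cq (run M w k)) = true /\ cout (run M w k) = f w) /\
      (forall k, cj (run M w k) <= c * Nat.log2 (length w + 2)).

Definition logspace_reducible (A B : list bool -> Prop) : Prop :=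
  exists f, logspace_computable f /\ forall w, A w <-> B (f w).

(* Main.v *)
Require Import Defs.
From Stdlib Require Import Arith List PArith Bool Lia Classical ClassicalEpsilon FunctionalExtensionality Cantor.
Import ListNotations.

Fixpoint dec_pos (s : list bool) : option (positive * list bool) :=
  match s with
  | false :: false :: r => Some (xH, r)
  | true :: b :: r => match dec_pos r with
                      | Some (p, r') => Some ((if b then xI p else xO p), r')
                      | None => None end
  | _ => None
  end.

Definition dec_nat (s : list bool) : option (nat * list bool) :=
  match s with
  | false :: true :: r => Some (0, r)
  | _ => match dec_pos s with Some (p, r) => Some (Pos.to_nat p, r) | None => None end
  end.

Lemma dec_pos_enc : forall p r, dec_pos (enc_pos p ++ [false; false] ++ r) = Some (p, r).
Proof. induction p; intros; simpl; try (specialize (IHp r); simpl in IHp; rewrite IHp); reflexivity. Qed.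

Lemma dec_nat_pos : forall p r, dec_nat (enc_pos p ++ [false; false] ++ r) = Some (Pos.to_nat p, r).
Proof.
  intros p r. assert (H := dec_pos_enc p r). unfold dec_nat.
  destruct p; simpl in *; try rewrite H; reflexivity.
Qed.

Lemma dec_nat_enc : forall n r, dec_nat (enc_nat n ++ r) = Some (n, r).
Proof.
  intros [|n] r; [reflexivity|].
  unfold enc_nat. rewrite <- app_assoc, dec_nat_pos, Nat2Pos.id by lia. reflexivity.
Qed.

Fixpoint dec_term (n : nat) (s : list bool) : option (term * list bool) :=
  match n with 0 => None | S n' =>
  match s with
  | b0 :: b1 :: b2 :: b3 :: r =>
    match b0, b1, b2, b3 with
    | false, false, false, false =>
        match dec_nat r with Some (i, r') => Some (TVar i, r') | None => None end
    | true, false, false, false => Some (TZero, r)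
    | false, true, false, false => Some (TOne, r)
    | true, true, false, false =>
        match dec_term n' r with
        | Some (a, r1) => match dec_term n' r1 with
                          | Some (b, r2) => Some (TAdd a b, r2) | None => None end
        | None => None end
    | false, false, true, false =>
        match dec_term n' r with
        | Some (a, r1) => match dec_term n' r1 with
                          | Some (b, r2) => Some (TMul a b, r2) | None => None end
        | None => None end
    | _, _, _, _ => None
    end
  | _ => None
  end end.

Fixpoint dec_terms (n k : nat) (s : list bool) : option (list term * list bool) :=
  match k with
  | 0 => Some ([], s)
  | S k' => match dec_term n s with
            | Some (t, r) => match dec_terms n k' r with
                             | Some (ts, r') => Some (t :: ts, r') | None => None end
            | None => None end
  end.

Fixpoint dec_form (n : nat) (s : list bool) : option (sform * list bool) :=
  match n with 0 => None | S n' =>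
  match s with
  | b0 :: b1 :: b2 :: b3 :: r =>
    match b0, b1, b2, b3 with
    | false, false, false, false =>
        match dec_term n' r with
        | Some (a, r1) => match dec_term n' r1 with
                          | Some (b, r2) => Some (SEq a b, r2) | None => None end
        | None => None end
    | true, false, false, false =>
        match dec_term n' r with
        | Some (a, r1) => match dec_term n' r1 with
                          | Some (b, r2) => Some (SLe a b, r2) | None => None end
        | None => None end
    | false, true, false, false =>
        match dec_nat r with
        | Some (j, r1) => match dec_nat r1 with
          | Some (m, r2) => match dec_nat r2 with
            | Some (l, r3) => match dec_terms n' l r3 with
              | Some (ts, r4) => Some (SMem j m ts, r4)
              | None => None end
            | None => None end
          | None => None end
        | None => None end
    | true, true, false, false =>
        match dec_form n' r with Some (a, r1) => Some (SNeg a, r1) | None => None end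
    | false, false, true, false =>
        match dec_form n' r with
        | Some (a, r1) => match dec_form n' r1 with
                          | Some (b, r2) => Some (SAnd a b, r2) | None => None end
        | None => None end
    | true, false, true, false =>
        match dec_form n' r with
        | Some (a, r1) => match dec_form n' r1 with
                          | Some (b, r2) => Some (SOr a b, r2) | None => None end
        | None => None end
    | false, true, true, false =>
        match dec_nat r with
        | Some (i, r1) => match dec_form n' r1 with Some (a, r2) => Some (SEx1 i a, r2) | None => None end
        | None => None end
    | true, true, true, false =>
        match dec_nat r with
        | Some (i, r1) => match dec_form n' r1 with Some (a, r2) => Some (SAll1 i a, r2) | None => None end
        | None => None end
    | false, false, false, true =>
        match dec_nat r with
        | Some (j, r1) => match dec_nat r1 with
          | Some (m, r2) => match dec_form n' r2 with Some (a, r3) => Some (SEx2 j m a, r3) | None => None end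
          | None => None end
        | None => None end
    | true, false, false, true =>
        match dec_nat r with
        | Some (j, r1) => match dec_nat r1 with
          | Some (m, r2) => match dec_form n' r2 with Some (a, r3) => Some (SAll2 j m a, r3) | None => None end
          | None => None end
        | None => None end
    | _, _, _, _ => None
    end
  | _ => None
  end end.

Fixpoint tsize (t : term) : nat :=
  match t with
  | TAdd a b | TMul a b => S (tsize a + tsize b)
  | _ => 1 end.

Lemma dec_term_mono : forall n t s r, dec_term n s = Some (t, r) -> dec_term (S n) s = Some (t, r).
Proof.
  induction n; intros t s r H; [discriminate|].
  destruct s as [|b0 [|b1 [|b2 [|b3 s]]]]; try discriminate.
  cbn [dec_term] in H. remember (S n) as m eqn:Em. cbn [dec_term]. subst m.
  destruct b0, b1, b2, b3; try exact H;
  (destruct (dec_term n s) as [[a r1]|] eqn:E1; [|discriminate];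
   destruct (dec_term n r1) as [[b r2]|] eqn:E2; [|discriminate];
   rewrite (IHn _ _ _ E1), (IHn _ _ _ E2); exact H).
Qed.

Lemma dec_term_mono_le : forall n m t s r, n <= m -> dec_term n s = Some (t, r) -> dec_term m s = Some (t, r).
Proof. intros n m t s r Hle; induction Hle; auto using dec_term_mono. Qed.

Lemma dec_terms_mono : forall n k ts s r, dec_terms n k s = Some (ts, r) -> dec_terms (S n) k s = Some (ts, r).
Proof.
  intros n k; induction k; intros ts s r H; cbn [dec_terms] in *; auto.
  destruct (dec_term n s) as [[a r1]|] eqn:E1; [|discriminate].
  rewrite (dec_term_mono _ _ _ _ E1).
  destruct (dec_terms n k r1) as [[b r2]|] eqn:E2; [|discriminate].
  rewrite (IHk _ _ _ E2). exact H.
Qed.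

Lemma dec_form_mono : forall n F s r, dec_form n s = Some (F, r) -> dec_form (S n) s = Some (F, r).
Proof.
  induction n; intros F s r H; [discriminate|].
  destruct s as [|b0 [|b1 [|b2 [|b3 s]]]]; try discriminate.
  cbn [dec_form] in H. remember (S n) as m eqn:Em. cbn [dec_form]. subst m.
  destruct b0, b1, b2, b3; try exact H.
  all: repeat match goal with
  | H : context [match dec_term ?nn ?x with _ => _ end] |- _ =>
      let E := fresh in destruct (dec_term nn x) as [[? ?]|] eqn:E; [|discriminate];
      rewrite (dec_term_mono _ _ _ _ E)
  | H : context [match dec_form ?nn ?x with _ => _ end] |- _ =>
      let E := fresh in destruct (dec_form nn x) as [[? ?]|] eqn:E; [|discriminate];
      rewrite (IHn _ _ _ E)
  | H : context [match dec_terms ?nn ?l ?x with _ => _ end] |- _ =>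
      let E := fresh in destruct (dec_terms nn l x) as [[? ?]|] eqn:E; [|discriminate];
      rewrite (dec_terms_mono _ _ _ _ _ E)
  | H : context [match dec_nat ?x with _ => _ end] |- _ =>
      let E := fresh in destruct (dec_nat x) as [[? ?]|] eqn:E; [|discriminate]
  end; exact H.
Qed.

Lemma dec_form_mono_le : forall n m F s r, n <= m -> dec_form n s = Some (F, r) -> dec_form m s = Some (F, r).
Proof. intros n m F s r Hle; induction Hle; auto using dec_form_mono. Qed.

Lemma dec_term_enc : forall t n r, tsize t <= n -> dec_term n (enc_term t ++ r) = Some (t, r).
Proof.
  induction t; intros m r Hn; destruct m as [|m]; simpl in Hn; try lia; simpl.
  - rewrite dec_nat_enc. reflexivity.
  - reflexivity.
  - reflexivity.
  - rewrite <- app_assoc, IHt1 by lia. rewrite IHt2 by lia. reflexivity.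
  - rewrite <- app_assoc, IHt1 by lia. rewrite IHt2 by lia. reflexivity.
Qed.

Lemma dec_terms_enc : forall ts n r, (forall t, In t ts -> tsize t <= n) ->
  dec_terms n (length ts) (flat_map enc_term ts ++ r) = Some (ts, r).
Proof.
  induction ts; intros n r H; simpl; auto.
  rewrite <- app_assoc, dec_term_enc by (apply H; simpl; auto).
  rewrite IHts by (intros; apply H; simpl; auto). reflexivity.
Qed.

Fixpoint fsize (f : sform) : nat :=
  match f with
  | SEq a b | SLe a b => S (tsize a + tsize b)
  | SMem _ _ ts => S (fold_right (fun t acc => tsize t + acc) 0 ts)
  | SNeg g | SEx1 _ g | SAll1 _ g | SEx2 _ _ g | SAll2 _ _ g => S (fsize g)
  | SAnd g h | SOr g h => S (fsize g + fsize h)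
  end.

Lemma fold_size_le : forall ts t, In t ts -> tsize t <= fold_right (fun t acc => tsize t + acc) 0 ts.
Proof. induction ts; simpl; intros t H; [contradiction|]. destruct H; subst; [lia|]. specialize (IHts _ H); lia. Qed.

Lemma dec_form_enc : forall F n r, fsize F <= n -> dec_form n (enc_sform F ++ r) = Some (F, r).
Proof.
  induction F; intros m r Hn; destruct m as [|m]; simpl in Hn; try lia; simpl;
  repeat rewrite <- app_assoc.
  - rewrite dec_term_enc by lia. rewrite dec_term_enc by lia. reflexivity.
  - rewrite dec_term_enc by lia. rewrite dec_term_enc by lia. reflexivity.
  - rewrite !dec_nat_enc. rewrite dec_terms_enc. reflexivity.
    intros t Ht. pose proof (fold_size_le _ _ Ht). lia.
  - rewrite IHF by lia. reflexivity.
  - rewrite IHF1 by lia. rewrite IHF2 by lia. reflexivity.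
  - rewrite IHF1 by lia. rewrite IHF2 by lia. reflexivity.
  - rewrite dec_nat_enc, IHF by lia. reflexivity.
  - rewrite dec_nat_enc, IHF by lia. reflexivity.
  - rewrite !dec_nat_enc, IHF by lia. reflexivity.
  - rewrite !dec_nat_enc, IHF by lia. reflexivity.
Qed.

Definition two := TAdd TOne TOne.
Fixpoint numpos (p : positive) : term :=
  match p with
  | xH => TOne
  | xO q => TAdd TZero (TMul two (numpos q))
  | xI q => TAdd TOne (TMul two (numpos q))
  end.
Definition num (n : nat) : term :=
  match n with 0 => TZero | S _ => numpos (Pos.of_nat n) end.

Definition memX v := SMem 0 1 [TVar v].
Definition memY v := SMem 1 1 [TVar v].
Definition memZ v := SMem 2 1 [TVar v].
Definition siff a b := SAnd (SOr (SNeg a) b) (SOr (SNeg b) a).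
Definition fUnion := SAll1 1 (siff (memX 1) (SOr (memY 1) (memZ 1))).
Definition fEqXY := SAll1 1 (siff (memX 1) (memY 1)).
Definition fEqXZ := SAll1 1 (siff (memX 1) (memZ 1)).
Definition fSingle := SAll1 5 (siff (memX 5) (SEq (TVar 5) (TVar 1))).
Definition setk (t : term) (f : sform) :=
  SEx1 3 (SAnd (SEq (TVar 3) (TVar 0)) (SEx1 0 (SAnd (SEq (TVar 0) t) f))).

Fixpoint tr (phi : ltl) : sform :=
  match phi with
  | LAtom p => SAll1 1 (SOr (SNeg (memX 1)) (SMem 0 3 [TVar 1; TVar 0; num p]))
  | LNeg f => SAll1 1 (SOr (SNeg (memX 1)) (SNeg (SEx2 0 1 (SAnd fSingle (tr f)))))
  | LAnd f g => SAnd (tr f) (tr g)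
  | LOr f g => SEx2 1 1 (SEx2 2 1 (SAnd fUnion (SEx2 0 1 (SAnd fEqXZ
                 (SAnd (SEx2 0 1 (SAnd fEqXY (tr f))) (tr g))))))
  | LX f => setk (TAdd (TVar 3) TOne) (tr f)
  | LF f => SEx1 2 (setk (TAdd (TVar 3) (TVar 2)) (tr f))
  | LG f => SAll1 2 (setk (TAdd (TVar 3) (TVar 2)) (tr f))
  | LU f g => SEx1 2 (setk (TAdd (TVar 3) (TVar 2))
                (SAnd (SAll1 4 (SOr (SNeg (SLe (TAdd (TVar 4) TOne) (TVar 2)))
                                    (SEx1 0 (SAnd (SEq (TVar 0) (TAdd (TVar 3) (TVar 4))) (tr f)))))
                      (tr g)))
  | LR f g => SAll1 2 (setk (TAdd (TVar 3) (TVar 2))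
                (SOr (SEx1 4 (SAnd (SLe (TAdd (TVar 4) TOne) (TVar 2))
                                    (SEx1 0 (SAnd (SEq (TVar 0) (TAdd (TVar 3) (TVar 4))) (tr f)))))
                      (tr g)))
  | LTilde f => SNeg (tr f)
  end.

Definition setk_frag (t : term) :=
  tag 6 ++ enc_nat 3 ++ tag 4 ++ enc_sform (SEq (TVar 3) (TVar 0)) ++ tag 6 ++ enc_nat 0 ++ tag 4
  ++ enc_sform (SEq (TVar 0) t).
Definition fragA := tag 7 ++ enc_nat 1 ++ tag 5 ++ enc_sform (SNeg (memX 1)) ++ tag 2 ++ enc_nat 0
  ++ enc_nat 3 ++ enc_nat 3 ++ enc_term (TVar 1) ++ enc_term (TVar 0).
Definition fragNeg := tag 7 ++ enc_nat 1 ++ tag 5 ++ enc_sform (SNeg (memX 1)) ++ tag 3 ++ tag 8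
  ++ enc_nat 0 ++ enc_nat 1 ++ tag 4 ++ enc_sform fSingle.
Definition fragAnd := tag 4.
Definition fragOr := tag 8 ++ enc_nat 1 ++ enc_nat 1 ++ tag 8 ++ enc_nat 2 ++ enc_nat 1 ++ tag 4
  ++ enc_sform fUnion ++ tag 8 ++ enc_nat 0 ++ enc_nat 1 ++ tag 4 ++ enc_sform fEqXZ ++ tag 4
  ++ tag 8 ++ enc_nat 0 ++ enc_nat 1 ++ tag 4 ++ enc_sform fEqXY.
Definition fragX := setk_frag (TAdd (TVar 3) TOne).
Definition fragF := tag 6 ++ enc_nat 2 ++ setk_frag (TAdd (TVar 3) (TVar 2)).
Definition fragG := tag 7 ++ enc_nat 2 ++ setk_frag (TAdd (TVar 3) (TVar 2)).
Definition fragU := tag 6 ++ enc_nat 2 ++ setk_frag (TAdd (TVar 3) (TVar 2)) ++ tag 4 ++ tag 7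
  ++ enc_nat 4 ++ tag 5 ++ enc_sform (SNeg (SLe (TAdd (TVar 4) TOne) (TVar 2))) ++ tag 6
  ++ enc_nat 0 ++ tag 4 ++ enc_sform (SEq (TVar 0) (TAdd (TVar 3) (TVar 4))).
Definition fragR := tag 7 ++ enc_nat 2 ++ setk_frag (TAdd (TVar 3) (TVar 2)) ++ tag 5 ++ tag 6
  ++ enc_nat 4 ++ tag 4 ++ enc_sform (SLe (TAdd (TVar 4) TOne) (TVar 2)) ++ tag 6
  ++ enc_nat 0 ++ tag 4 ++ enc_sform (SEq (TVar 0) (TAdd (TVar 3) (TVar 4))).
Definition fragT := tag 3.

Ltac encsolve := simpl; repeat (rewrite <- ?app_assoc; simpl); reflexivity.

Lemma enc_tr_atom p : enc_sform (tr (LAtom p)) = fragA ++ enc_term (num p).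
Proof. unfold fragA; simpl. rewrite app_nil_r. encsolve. Qed.
Lemma enc_tr_neg f : enc_sform (tr (LNeg f)) = fragNeg ++ enc_sform (tr f).
Proof. unfold fragNeg; encsolve. Qed.
Lemma enc_tr_and f g : enc_sform (tr (LAnd f g)) = fragAnd ++ enc_sform (tr f) ++ enc_sform (tr g).
Proof. unfold fragAnd; encsolve. Qed.
Lemma enc_tr_or f g : enc_sform (tr (LOr f g)) = fragOr ++ enc_sform (tr f) ++ enc_sform (tr g).
Proof. unfold fragOr; encsolve. Qed.
Lemma enc_tr_x f : enc_sform (tr (LX f)) = fragX ++ enc_sform (tr f).
Proof. unfold fragX, setk_frag; encsolve. Qed.
Lemma enc_tr_f f : enc_sform (tr (LF f)) = fragF ++ enc_sform (tr f).
Proof. unfold fragF, setk_frag; encsolve. Qed.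
Lemma enc_tr_g f : enc_sform (tr (LG f)) = fragG ++ enc_sform (tr f).
Proof. unfold fragG, setk_frag; encsolve. Qed.
Lemma enc_tr_u f g : enc_sform (tr (LU f g)) = fragU ++ enc_sform (tr f) ++ enc_sform (tr g).
Proof. unfold fragU, setk_frag; encsolve. Qed.
Lemma enc_tr_r f g : enc_sform (tr (LR f g)) = fragR ++ enc_sform (tr f) ++ enc_sform (tr g).
Proof. unfold fragR, setk_frag; encsolve. Qed.
Lemma enc_tr_t f : enc_sform (tr (LTilde f)) = fragT ++ enc_sform (tr f).
Proof. unfold fragT; encsolve. Qed.

Inductive st := SInit | SStart | ST1 (b0 : bool) | ST2 (b0 b1 : bool) | ST3 (b0 b1 b2 : bool)
  | SNf | SNf2 (c : bool) | SNl | SNl2 (c : bool) | SHalt.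

Definition poison := [true; true; true; true].
Definition pairfrag (b : bool) := tag 3 ++ enc_term (if b then TOne else TZero) ++ tag 4 ++ enc_term two.

Definition tagout (b0 b1 b2 b3 : bool) : list bool * st :=
  match b0, b1, b2, b3 with
  | false, false, false, false => (fragA, SNf)
  | true, false, false, false => (fragNeg, SStart)
  | false, true, false, false => (fragAnd, SStart)
  | true, true, false, false => (fragOr, SStart)
  | false, false, true, false => (fragX, SStart)
  | true, false, true, false => (fragF, SStart)
  | false, true, true, false => (fragG, SStart)
  | true, true, true, false => (fragU, SStart)
  | false, false, false, true => (fragR, SStart)
  | true, false, false, true => (fragT, SStart)
  | _, _, _, _ => (poison, SHalt)
  end.

Definition stepB (s : st) (b : bool) : list bool * st :=
  match s with
  | SStart => ([], ST1 b)
  | ST1 b0 => ([], ST2 b0 b)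
  | ST2 b0 b1 => ([], ST3 b0 b1 b)
  | ST3 b0 b1 b2 => tagout b0 b1 b2 b
  | SNf => ([], SNf2 b)
  | SNf2 c0 => match c0, b with
               | false, true => (enc_term TZero, SStart)
               | false, false => (enc_term TOne, SStart)
               | true, _ => (pairfrag b, SNl) end
  | SNl => ([], SNl2 b)
  | SNl2 c0 => match c0, b with
               | false, false => (enc_term TOne, SStart)
               | false, true => (poison, SHalt)
               | true, _ => (pairfrag b, SNl) end
  | _ => ([], SHalt)
  end.

Definition endo (s : st) : list bool :=
  match s with SStart | SHalt | SInit => [] | _ => poison end.

Fixpoint O (s : st) (w : list bool) : list bool :=
  match w with
  | [] => endo s
  | b :: w' => let (o, s') := stepB s b in
               o ++ (match s' with SHalt => [] | _ => O s' w' end)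
  end.

Lemma O_num_later : forall p r, O SNl (enc_pos p ++ [false; false] ++ r) = enc_term (numpos p) ++ O SStart r.
Proof.
  induction p; intros r; simpl in *.
  - rewrite IHp. unfold pairfrag. simpl. repeat (rewrite <- ?app_assoc; simpl). reflexivity.
  - rewrite IHp. unfold pairfrag. simpl. repeat (rewrite <- ?app_assoc; simpl). reflexivity.
  - reflexivity.
Qed.

Lemma O_num_later' : forall p r, O SNl (enc_pos p ++ false :: false :: r) = enc_term (numpos p) ++ O SStart r.
Proof. intros; apply (O_num_later p r). Qed.

Lemma O_num_first : forall n r, O SNf (enc_nat n ++ r) = enc_term (num n) ++ O SStart r.
Proof.
  intros [|n] r; [reflexivity|].
  unfold enc_nat, num. rewrite <- app_assoc.
  destruct (Pos.of_nat (S n)) as [p|p|]; simpl.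
  - rewrite O_num_later'. unfold pairfrag. simpl. repeat (rewrite <- ?app_assoc; simpl). reflexivity.
  - rewrite O_num_later'. unfold pairfrag. simpl. repeat (rewrite <- ?app_assoc; simpl). reflexivity.
  - reflexivity.
Qed.

Lemma O_t0 w : O SStart (tag 0 ++ w) = fragA ++ O SNf w. Proof. reflexivity. Qed.
Lemma O_t1 w : O SStart (tag 1 ++ w) = fragNeg ++ O SStart w. Proof. reflexivity. Qed.
Lemma O_t2 w : O SStart (tag 2 ++ w) = fragAnd ++ O SStart w. Proof. reflexivity. Qed.
Lemma O_t3 w : O SStart (tag 3 ++ w) = fragOr ++ O SStart w. Proof. reflexivity. Qed.
Lemma O_t4 w : O SStart (tag 4 ++ w) = fragX ++ O SStart w. Proof. reflexivity. Qed.
Lemma O_t5 w : O SStart (tag 5 ++ w) = fragF ++ O SStart w. Proof. reflexivity. Qed.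
Lemma O_t6 w : O SStart (tag 6 ++ w) = fragG ++ O SStart w. Proof. reflexivity. Qed.
Lemma O_t7 w : O SStart (tag 7 ++ w) = fragU ++ O SStart w. Proof. reflexivity. Qed.
Lemma O_t8 w : O SStart (tag 8 ++ w) = fragR ++ O SStart w. Proof. reflexivity. Qed.
Lemma O_t9 w : O SStart (tag 9 ++ w) = fragT ++ O SStart w. Proof. reflexivity. Qed.

Lemma O_enc : forall phi r, O SStart (enc_ltl phi ++ r) = enc_sform (tr phi) ++ O SStart r.
Proof.
  induction phi; intros r; cbn [enc_ltl]; repeat rewrite <- app_assoc.
  - rewrite enc_tr_atom, O_t0, O_num_first, app_assoc. reflexivity.
  - rewrite enc_tr_neg, O_t1, IHphi, app_assoc. reflexivity.
  - rewrite enc_tr_and, O_t2, IHphi1, IHphi2, !app_assoc. reflexivity.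
  - rewrite enc_tr_or, O_t3, IHphi1, IHphi2, !app_assoc. reflexivity.
  - rewrite enc_tr_x, O_t4, IHphi, app_assoc. reflexivity.
  - rewrite enc_tr_f, O_t5, IHphi, app_assoc. reflexivity.
  - rewrite enc_tr_g, O_t6, IHphi, app_assoc. reflexivity.
  - rewrite enc_tr_u, O_t7, IHphi1, IHphi2, !app_assoc. reflexivity.
  - rewrite enc_tr_r, O_t8, IHphi1, IHphi2, !app_assoc. reflexivity.
  - rewrite enc_tr_t, O_t9, IHphi, app_assoc. reflexivity.
Qed.

Definition DF s F r := exists N, dec_form N s = Some (F, r).
Definition DT s t r := exists N, dec_term N s = Some (t, r).
Definition DTs k s ts r := exists N, dec_terms N k s = Some (ts, r).

Lemma DF_det : forall G s F r, DF (enc_sform G ++ s) F r -> F = G /\ r = s.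
Proof.
  intros G s F r [N H].
  assert (H1 := dec_form_mono_le N (N + fsize G) _ _ _ ltac:(lia) H).
  rewrite dec_form_enc in H1 by lia. injection H1; auto.
Qed.

Lemma DT_det : forall G s F r, DT (enc_term G ++ s) F r -> F = G /\ r = s.
Proof.
  intros G s F r [N H].
  assert (H1 := dec_term_mono_le N (N + tsize G) _ _ _ ltac:(lia) H).
  rewrite dec_term_enc in H1 by lia. injection H1; auto.
Qed.

Ltac headtac bits :=
  let N := fresh "N" in let H := fresh "H" in
  intros [N H]; destruct N as [|N]; [discriminate|];
  match type of H with dec_form _ (?t ++ ?x) = _ => change (t ++ x) with (bits ++ x) in H
                     | dec_term _ (?t ++ ?x) = _ => change (t ++ x) with (bits ++ x) in H end;
  cbn [dec_form dec_term app] in H; repeat (rewrite dec_nat_enc in H; cbv beta iota in H).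

Lemma inv_ex2 : forall j m s F r, DF (tag 8 ++ enc_nat j ++ enc_nat m ++ s) F r ->
  exists a, DF s a r /\ F = SEx2 j m a.
Proof.
  intros j m s F r. headtac [false;false;false;true].
  destruct (dec_form N s) as [[a r1]|] eqn:E; [|discriminate]. injection H; intros; subst.
  exists a; split; [exists N|]; auto.
Qed.

Lemma inv_ex1 : forall j s F r, DF (tag 6 ++ enc_nat j ++ s) F r ->
  exists a, DF s a r /\ F = SEx1 j a.
Proof.
  intros j s F r. headtac [false;true;true;false].
  destruct (dec_form N s) as [[a r1]|] eqn:E; [|discriminate]. injection H; intros; subst.
  exists a; split; [exists N|]; auto.
Qed.

Lemma inv_all1 : forall j s F r, DF (tag 7 ++ enc_nat j ++ s) F r ->
  exists a, DF s a r /\ F = SAll1 j a.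
Proof.
  intros j s F r. headtac [true;true;true;false].
  destruct (dec_form N s) as [[a r1]|] eqn:E; [|discriminate]. injection H; intros; subst.
  exists a; split; [exists N|]; auto.
Qed.

Lemma inv_neg : forall s F r, DF (tag 3 ++ s) F r -> exists a, DF s a r /\ F = SNeg a.
Proof.
  intros s F r. headtac [true;true;false;false].
  destruct (dec_form N s) as [[a r1]|] eqn:E; [|discriminate]. injection H; intros; subst.
  exists a; split; [exists N|]; auto.
Qed.

Lemma inv_and : forall s F r, DF (tag 4 ++ s) F r ->
  exists a b r1, DF s a r1 /\ DF r1 b r /\ F = SAnd a b.
Proof.
  intros s F r. headtac [false;false;true;false].
  destruct (dec_form N s) as [[a r1]|] eqn:E; [|discriminate].
  destruct (dec_form N r1) as [[b r2]|] eqn:E2; [|discriminate]. injection H; intros; subst.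
  exists a, b, r1; repeat split; [exists N|exists N]; auto.
Qed.

Lemma inv_or : forall s F r, DF (tag 5 ++ s) F r ->
  exists a b r1, DF s a r1 /\ DF r1 b r /\ F = SOr a b.
Proof.
  intros s F r. headtac [true;false;true;false].
  destruct (dec_form N s) as [[a r1]|] eqn:E; [|discriminate].
  destruct (dec_form N r1) as [[b r2]|] eqn:E2; [|discriminate]. injection H; intros; subst.
  exists a, b, r1; repeat split; [exists N|exists N]; auto.
Qed.

Lemma inv_mem : forall j m l s F r, DF (tag 2 ++ enc_nat j ++ enc_nat m ++ enc_nat l ++ s) F r ->
  exists ts, DTs l s ts r /\ F = SMem j m ts.
Proof.
  intros j m l s F r. headtac [false;true;false;false].
  destruct (dec_terms N l s) as [[a r1]|] eqn:E; [|discriminate]. injection H; intros; subst.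
  exists a; split; [exists N|]; auto.
Qed.

Lemma inv_tadd : forall s t r, DT (tag 3 ++ s) t r ->
  exists a b r1, DT s a r1 /\ DT r1 b r /\ t = TAdd a b.
Proof.
  intros s F r. headtac [true;true;false;false].
  destruct (dec_term N s) as [[a r1]|] eqn:E; [|discriminate].
  destruct (dec_term N r1) as [[b r2]|] eqn:E2; [|discriminate]. injection H; intros; subst.
  exists a, b, r1; repeat split; [exists N|exists N]; auto.
Qed.

Lemma inv_tmul : forall s t r, DT (tag 4 ++ s) t r ->
  exists a b r1, DT s a r1 /\ DT r1 b r /\ t = TMul a b.
Proof.
  intros s F r. headtac [false;false;true;false].
  destruct (dec_term N s) as [[a r1]|] eqn:E; [|discriminate].
  destruct (dec_term N r1) as [[b r2]|] eqn:E2; [|discriminate]. injection H; intros; subst.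
  exists a, b, r1; repeat split; [exists N|exists N]; auto.
Qed.

Lemma inv_terms_S : forall k s ts r, DTs (S k) s ts r ->
  exists t ts' r1, DT s t r1 /\ DTs k r1 ts' r /\ ts = t :: ts'.
Proof.
  intros k s ts r [N H]. cbn [dec_terms] in H.
  destruct (dec_term N s) as [[a r1]|] eqn:E; [|discriminate].
  destruct (dec_terms N k r1) as [[b r2]|] eqn:E2; [|discriminate]. injection H; intros; subst.
  exists a, b, r1; repeat split; [exists N|exists N]; auto.
Qed.

Lemma inv_terms_0 : forall s ts r, DTs 0 s ts r -> ts = [] /\ r = s.
Proof. intros s ts r [N H]. simpl in H. injection H; auto. Qed.

Lemma DF_poison : forall s F r, ~ DF (poison ++ s) F r.
Proof. intros s F r [N H]. destruct N; discriminate. Qed.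
Lemma DT_poison : forall s F r, ~ DT (poison ++ s) F r.
Proof. intros s F r [N H]. destruct N; discriminate. Qed.

Definition tA t := SAll1 1 (SOr (SNeg (memX 1)) (SMem 0 3 [TVar 1; TVar 0; t])).
Definition tNeg a := SAll1 1 (SOr (SNeg (memX 1)) (SNeg (SEx2 0 1 (SAnd fSingle a)))).
Definition tOr a b := SEx2 1 1 (SEx2 2 1 (SAnd fUnion (SEx2 0 1 (SAnd fEqXZ
                 (SAnd (SEx2 0 1 (SAnd fEqXY a)) b))))).
Definition tX a := setk (TAdd (TVar 3) TOne) a.
Definition tF a := SEx1 2 (setk (TAdd (TVar 3) (TVar 2)) a).
Definition tG a := SAll1 2 (setk (TAdd (TVar 3) (TVar 2)) a).
Definition tU a b := SEx1 2 (setk (TAdd (TVar 3) (TVar 2))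
                (SAnd (SAll1 4 (SOr (SNeg (SLe (TAdd (TVar 4) TOne) (TVar 2)))
                                    (SEx1 0 (SAnd (SEq (TVar 0) (TAdd (TVar 3) (TVar 4))) a))))
                      b)).
Definition tR a b := SAll1 2 (setk (TAdd (TVar 3) (TVar 2))
                (SOr (SEx1 4 (SAnd (SLe (TAdd (TVar 4) TOne) (TVar 2))
                                    (SEx1 0 (SAnd (SEq (TVar 0) (TAdd (TVar 3) (TVar 4))) a))))
                      b)).

Ltac dstep :=
  match goal with
  | H : DF (tag 8 ++ enc_nat _ ++ enc_nat _ ++ _) _ _ |- _ =>
      apply inv_ex2 in H; destruct H as [? [H ?]]; subst
  | H : DF (tag 6 ++ enc_nat _ ++ _) _ _ |- _ =>
      apply inv_ex1 in H; destruct H as [? [H ?]]; subst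
  | H : DF (tag 7 ++ enc_nat _ ++ _) _ _ |- _ =>
      apply inv_all1 in H; destruct H as [? [H ?]]; subst
  | H : DF (tag 3 ++ _) _ _ |- _ =>
      apply inv_neg in H; destruct H as [? [H ?]]; subst
  | H : DF (tag 4 ++ _) _ _ |- _ =>
      let H1 := fresh "H" in apply inv_and in H; destruct H as [? [? [? [H [H1 ?]]]]]; subst
  | H : DF (tag 5 ++ _) _ _ |- _ =>
      let H1 := fresh "H" in apply inv_or in H; destruct H as [? [? [? [H [H1 ?]]]]]; subst
  | H : DF (tag 2 ++ enc_nat _ ++ enc_nat _ ++ enc_nat _ ++ _) _ _ |- _ =>
      apply inv_mem in H; destruct H as [? [H ?]]; subst
  | H : DF (enc_sform _ ++ _) _ _ |- _ =>
      apply DF_det in H; destruct H; subst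
  | H : DTs (S _) _ _ _ |- _ =>
      let H1 := fresh "H" in apply inv_terms_S in H; destruct H as [? [? [? [H [H1 ?]]]]]; subst
  | H : DTs 0 _ _ _ |- _ => apply inv_terms_0 in H; destruct H; subst
  | H : DT (enc_term _ ++ _) _ _ |- _ => apply DT_det in H; destruct H; subst
  | H : DT (tag 3 ++ _) _ _ |- _ =>
      let H1 := fresh "H" in apply inv_tadd in H; destruct H as [? [? [? [H [H1 ?]]]]]; subst
  | H : DT (tag 4 ++ _) _ _ |- _ =>
      let H1 := fresh "H" in apply inv_tmul in H; destruct H as [? [? [? [H [H1 ?]]]]]; subst
  end.

Ltac fragtac := intros s F r H; repeat rewrite <- app_assoc in H; repeat dstep.

Lemma dec_fA : forall s F r, DF (fragA ++ s) F r -> exists t, DT s t r /\ F = tA t.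
Proof. unfold fragA. fragtac. eauto. Qed.
Lemma dec_fNeg : forall s F r, DF (fragNeg ++ s) F r -> exists a, DF s a r /\ F = tNeg a.
Proof. unfold fragNeg. fragtac. eauto. Qed.
Lemma dec_fAnd : forall s F r, DF (fragAnd ++ s) F r ->
  exists a b r1, DF s a r1 /\ DF r1 b r /\ F = SAnd a b.
Proof. unfold fragAnd. fragtac. eauto 6. Qed.
Lemma dec_fOr : forall s F r, DF (fragOr ++ s) F r ->
  exists a b r1, DF s a r1 /\ DF r1 b r /\ F = tOr a b.
Proof. unfold fragOr. fragtac. eauto 6. Qed.
Lemma dec_fX : forall s F r, DF (fragX ++ s) F r -> exists a, DF s a r /\ F = tX a.
Proof. unfold fragX, setk_frag. fragtac. eauto. Qed.
Lemma dec_fF : forall s F r, DF (fragF ++ s) F r -> exists a, DF s a r /\ F = tF a.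
Proof. unfold fragF, setk_frag. fragtac. eauto. Qed.
Lemma dec_fG : forall s F r, DF (fragG ++ s) F r -> exists a, DF s a r /\ F = tG a.
Proof. unfold fragG, setk_frag. fragtac. eauto. Qed.
Lemma dec_fU : forall s F r, DF (fragU ++ s) F r ->
  exists a b r1, DF s a r1 /\ DF r1 b r /\ F = tU a b.
Proof. unfold fragU, setk_frag. fragtac. eauto 6. Qed.
Lemma dec_fR : forall s F r, DF (fragR ++ s) F r ->
  exists a b r1, DF s a r1 /\ DF r1 b r /\ F = tR a b.
Proof. unfold fragR, setk_frag. fragtac. eauto 6. Qed.
Lemma dec_fT : forall s F r, DF (fragT ++ s) F r -> exists a, DF s a r /\ F = SNeg a.
Proof. unfold fragT. fragtac. eauto. Qed.

Lemma dec_pair : forall b s t r, DT (pairfrag b ++ s) t r ->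
  exists u, DT s u r /\ t = TAdd (if b then TOne else TZero) (TMul two u).
Proof. intros b s t r H. unfold pairfrag in H. repeat rewrite <- app_assoc in H. repeat dstep. eauto. Qed.

Lemma ONl_T b w : O SNl (true :: b :: w) = pairfrag b ++ O SNl w. Proof. reflexivity. Qed.
Lemma ONl_FF w : O SNl (false :: false :: w) = enc_term TOne ++ O SStart w. Proof. reflexivity. Qed.
Lemma ONl_FT w : O SNl (false :: true :: w) = poison ++ []. Proof. reflexivity. Qed.
Lemma ONl_0 : O SNl [] = poison ++ []. Proof. reflexivity. Qed.
Lemma ONl_1 c : O SNl [c] = poison ++ []. Proof. reflexivity. Qed.
Lemma ONf_T b w : O SNf (true :: b :: w) = pairfrag b ++ O SNl w. Proof. reflexivity. Qed.
Lemma ONf_FF w : O SNf (false :: false :: w) = enc_term TOne ++ O SStart w. Proof. reflexivity. Qed.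
Lemma ONf_FT w : O SNf (false :: true :: w) = enc_term TZero ++ O SStart w. Proof. reflexivity. Qed.
Lemma ONf_0 : O SNf [] = poison ++ []. Proof. reflexivity. Qed.
Lemma ONf_1 c : O SNf [c] = poison ++ []. Proof. reflexivity. Qed.

Lemma numinv_later : forall L w, length w <= L -> forall t r, DT (O SNl w) t r ->
  exists p w', w = enc_pos p ++ [false; false] ++ w' /\ t = numpos p /\ r = O SStart w'.
Proof.
  induction L; intros w Hl t r H.
  - destruct w; [|simpl in Hl; lia]. rewrite ONl_0 in H. now apply DT_poison in H.
  - destruct w as [|c0 [|c1 w]].
    + rewrite ONl_0 in H. now apply DT_poison in H.
    + rewrite ONl_1 in H. now apply DT_poison in H.
    + destruct c0.
      * rewrite ONl_T in H. apply dec_pair in H. destruct H as [u [H ->]].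
        simpl in Hl. destruct (IHL w ltac:(lia) _ _ H) as [p [w' [-> [-> ->]]]].
        exists (if c1 then xI p else xO p), w'. destruct c1; repeat split.
      * destruct c1.
        -- rewrite ONl_FT in H. now apply DT_poison in H.
        -- rewrite ONl_FF in H. apply DT_det in H. destruct H as [-> ->].
           exists xH, w. repeat split.
Qed.

Lemma enc_nat_pos : forall p, enc_nat (Pos.to_nat p) = enc_pos p ++ [false; false].
Proof.
  intros p. destruct (Pos2Nat.is_succ p) as [k Hk]. unfold enc_nat. rewrite Hk.
  rewrite <- Hk, Pos2Nat.id. reflexivity.
Qed.
Lemma num_pos : forall p, num (Pos.to_nat p) = numpos p.
Proof.
  intros p. destruct (Pos2Nat.is_succ p) as [k Hk]. unfold num. rewrite Hk.
  rewrite <- Hk, Pos2Nat.id. reflexivity.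
Qed.

Lemma numinv_first : forall w t r, DT (O SNf w) t r ->
  exists n w', w = enc_nat n ++ w' /\ t = num n /\ r = O SStart w'.
Proof.
  intros w t r H.
  destruct w as [|c0 [|c1 w]].
  + rewrite ONf_0 in H. now apply DT_poison in H.
  + rewrite ONf_1 in H. now apply DT_poison in H.
  + destruct c0.
    * rewrite ONf_T in H. apply dec_pair in H. destruct H as [u [H ->]].
      destruct (numinv_later _ w (le_n _) _ _ H) as [p [w' [-> [-> ->]]]].
      exists (Pos.to_nat (if c1 then xI p else xO p)), w'.
      rewrite enc_nat_pos, num_pos. destruct c1; (split; [simpl; rewrite <- app_assoc; reflexivity| split; reflexivity]).
    * destruct c1.
      -- rewrite ONf_FT in H. apply DT_det in H. destruct H as [-> ->].
         exists 0, w. repeat split.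
      -- rewrite ONf_FF in H. apply DT_det in H. destruct H as [-> ->].
         exists 1, w. repeat split.
Qed.

Fixpoint dec_forms (N n : nat) (s : list bool) : option (list sform * list bool) :=
  match n with
  | 0 => Some ([], s)
  | S n' => match dec_form N s with
            | Some (F, r) => match dec_forms N n' r with
                             | Some (Fs, r') => Some (F :: Fs, r') | None => None end
            | None => None end
  end.
Definition DFs n s Fs r := exists N, dec_forms N n s = Some (Fs, r).

Lemma dec_forms_mono : forall n N M s Fs r, N <= M -> dec_forms N n s = Some (Fs, r) ->
  dec_forms M n s = Some (Fs, r).
Proof.
  induction n; intros N M s Fs r Hle H; simpl in *; auto.
  destruct (dec_form N s) as [[a r1]|] eqn:E; [|discriminate].
  rewrite (dec_form_mono_le _ _ _ _ _ Hle E).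
  destruct (dec_forms N n r1) as [[b r2]|] eqn:E2; [|discriminate].
  rewrite (IHn _ _ _ _ _ Hle E2). exact H.
Qed.

Lemma DFs_0 : forall s Fs r, DFs 0 s Fs r -> Fs = [] /\ r = s.
Proof. intros s Fs r [N H]. simpl in H. injection H; auto. Qed.

Lemma DFs_S_inv : forall n s Fs r, DFs (S n) s Fs r ->
  exists F Fs' r1, DF s F r1 /\ DFs n r1 Fs' r /\ Fs = F :: Fs'.
Proof.
  intros n s Fs r [N H]. simpl in H.
  destruct (dec_form N s) as [[a r1]|] eqn:E; [|discriminate].
  destruct (dec_forms N n r1) as [[b r2]|] eqn:E2; [|discriminate]. injection H; intros; subst.
  exists a, b, r1; repeat split; [exists N|exists N]; auto.
Qed.

Lemma DFs_S_intro : forall n s F r1 Fs r, DF s F r1 -> DFs n r1 Fs r -> DFs (S n) s (F :: Fs) r.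
Proof.
  intros n s F r1 Fs r [N1 H1] [N2 H2]. exists (N1 + N2). simpl.
  rewrite (dec_form_mono_le N1 (N1 + N2) _ _ _ ltac:(lia) H1).
  rewrite (dec_forms_mono _ N2 (N1 + N2) _ _ _ ltac:(lia) H2). reflexivity.
Qed.

Lemma DF_nil : forall F r, ~ DF [] F r.
Proof. intros F r [N H]. destruct N; discriminate. Qed.

Lemma OS4 b0 b1 b2 b3 w : O SStart (b0 :: b1 :: b2 :: b3 :: w) =
  fst (tagout b0 b1 b2 b3) ++ match snd (tagout b0 b1 b2 b3) with SHalt => [] | s' => O s' w end.
Proof. simpl. destruct (tagout b0 b1 b2 b3) as [l s]. simpl. destruct s; reflexivity. Qed.

Lemma poison_out : forall n Fs, ~ DFs n (poison ++ []) Fs [].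
Proof.
  intros [|n] Fs H.
  - apply DFs_0 in H. destruct H as [_ H]. discriminate.
  - apply DFs_S_inv in H. destruct H as [F [Fs' [r1 [H _]]]]. eapply DF_poison; eauto.
Qed.

Lemma frag_nonempty_DFs : forall fr s Fs, fr <> [] -> DFs 0 (fr ++ s) Fs [] -> False.
Proof. intros fr s Fs Hf H. apply DFs_0 in H. destruct H as [_ H]. destruct fr; [congruence|discriminate]. Qed.

Ltac un lem C :=
  match goal with
  | H1 : DF _ _ _, H2 : DFs _ _ _ _, IHL : _ , Hw : length ?w <= _ |- _ =>
    apply lem in H1; destruct H1 as [a [H1 ->]];
    destruct (IHL w Hw _ _ (DFs_S_intro _ _ _ _ _ _ H1 H2)) as [phis [-> Hm]];
    destruct phis as [|p1 ps]; [discriminate|]; injection Hm; intros; subst;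
    exists (C p1 :: ps); split; reflexivity
  end.
Ltac bin lem C :=
  match goal with
  | H1 : DF _ _ _, H2 : DFs _ _ _ _, IHL : _ , Hw : length ?w <= _ |- _ =>
    apply lem in H1; destruct H1 as [a [b [r2 [H1 [H3 ->]]]]];
    destruct (IHL w Hw _ _ (DFs_S_intro _ _ _ _ _ _ H1 (DFs_S_intro _ _ _ _ _ _ H3 H2)))
      as [phis [-> Hm]];
    destruct phis as [|p1 [|p2 ps]]; try discriminate; injection Hm; intros; subst;
    exists (C p1 p2 :: ps); split; [simpl; rewrite !app_assoc; reflexivity | reflexivity]
  end.

Theorem main_inv : forall L w, length w <= L -> forall n Fs, DFs n (O SStart w) Fs [] ->
  exists phis, w = flat_map enc_ltl phis /\ Fs = map tr phis.
Proof.
  induction L; intros w Hl n Fs H.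
  - destruct w; [|simpl in Hl; lia]. simpl in H. destruct n.
    + apply DFs_0 in H. destruct H as [-> _]. exists []. auto.
    + apply DFs_S_inv in H. destruct H as [? [? [? [H _]]]]. now apply DF_nil in H.
  - destruct w as [|b0 [|b1 [|b2 [|b3 w]]]].
    + simpl in H. destruct n.
      * apply DFs_0 in H. destruct H as [-> _]. exists []. auto.
      * apply DFs_S_inv in H. destruct H as [? [? [? [H _]]]]. now apply DF_nil in H.
    + exfalso. change (O SStart [b0]) with (poison ++ []) in H. eapply poison_out; eauto.
    + exfalso. change (O SStart [b0; b1]) with (poison ++ []) in H. eapply poison_out; eauto.
    + exfalso. change (O SStart [b0; b1; b2]) with (poison ++ []) in H. eapply poison_out; eauto.
    + simpl in Hl. assert (Hw : length w <= L) by lia. clear Hl.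
      rewrite OS4 in H.
      destruct b0, b1, b2, b3; cbn [tagout fst snd] in H;
      try solve [exfalso; rewrite <- (app_nil_r poison) in H; eapply poison_out; eauto];
      (destruct n as [|n]; [exfalso; eapply frag_nonempty_DFs; [|exact H]; cbv; discriminate|]);
      apply DFs_S_inv in H; destruct H as [F [Fs' [r1 [H1 [H2 ->]]]]].
      all: first
        [ apply dec_fA in H1; destruct H1 as [t [H1 ->]];
          apply numinv_first in H1; destruct H1 as [m [w' [-> [-> ->]]]];
          rewrite length_app in Hw;
          destruct (IHL w' ltac:(lia) _ _ H2) as [phis [-> ->]];
          exists (LAtom m :: phis); split; reflexivity
        | un dec_fNeg LNeg | un dec_fX LX | un dec_fF LF | un dec_fG LG | un dec_fT LTilde
        | bin dec_fAnd LAnd | bin dec_fOr LOr | bin dec_fU LU | bin dec_fR LR ].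
Qed.

Definition b2n (b : bool) := if b then 1 else 0.
Definition st_to_nat (s : st) : nat :=
  match s with
  | SInit => 0 | SStart => 1 | ST1 b => 2 + b2n b | ST2 b0 b1 => 4 + b2n b0 + 2 * b2n b1
  | ST3 b0 b1 b2 => 8 + b2n b0 + 2 * b2n b1 + 4 * b2n b2
  | SNf => 16 | SNf2 c => 17 + b2n c | SNl => 19 | SNl2 c => 20 + b2n c | SHalt => 22 end.
Definition nat_to_st (n : nat) : st :=
  match n with
  | 0 => SInit | 1 => SStart | 2 => ST1 false | 3 => ST1 true
  | 4 => ST2 false false | 5 => ST2 true false | 6 => ST2 false true | 7 => ST2 true true
  | 8 => ST3 false false false | 9 => ST3 true false false | 10 => ST3 false true false
  | 11 => ST3 true true false | 12 => ST3 false false true | 13 => ST3 true false true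
  | 14 => ST3 false true true | 15 => ST3 true true true
  | 16 => SNf | 17 => SNf2 false | 18 => SNf2 true | 19 => SNl | 20 => SNl2 false | 21 => SNl2 true
  | _ => SHalt end.
Lemma st_roundtrip : forall s, nat_to_st (st_to_nat s) = s.
Proof. destruct s; repeat match goal with b : bool |- _ => destruct b end; reflexivity. Qed.
Lemma st_bound : forall s, st_to_nat s < 23.
Proof. destruct s; repeat match goal with b : bool |- _ => destruct b end; simpl; lia. Qed.

Definition dH (pre : list bool) (s : st) (a : Sym) : list bool * st * Dir :=
  match s, a with
  | SInit, LEnd => (pre, SStart, DR)
  | SInit, _ => ([], SHalt, DS)
  | SHalt, _ => ([], SHalt, DS)
  | _, Bit b => let (o, s') := stepB s b in (o, s', match s' with SHalt => DS | _ => DR end)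
  | _, REnd => (endo s, SHalt, DS)
  | _, LEnd => ([], SHalt, DS)
  end.

Definition outs (pre : list bool) : list (list bool) :=
  [pre; fragA; fragNeg; fragAnd; fragOr; fragX; fragF; fragG; fragU; fragR; fragT; poison;
   pairfrag true; pairfrag false; enc_term TOne; enc_term TZero; []].

Lemma dH_out_in : forall pre s a, In (fst (fst (dH pre s a))) (outs pre).
Proof.
  intros pre s a.
  destruct s; destruct a; repeat match goal with b : bool |- _ => destruct b end;
  simpl; tauto.
Qed.

Definition maxlen (l : list (list bool)) := fold_right (fun x acc => Nat.max (length x) acc) 0 l.
Lemma maxlen_in : forall l x, In x l -> length x <= maxlen l.
Proof. induction l; simpl; intros x H; [contradiction|]. destruct H; subst; [lia|]. specialize (IHl _ H); lia. Qed.

Definition st_eq_dec : forall a b : st, {a = b} + {a <> b}.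
Proof. decide equality; apply bool_dec. Defined.

Section TM.
Variable pre : list bool.
Definition LL := S (maxlen (outs pre)).
Lemma LL_pos : LL <> 0. Proof. unfold LL; lia. Qed.
Arguments LL : simpl never.
Lemma out_lt : forall s a, length (fst (fst (dH pre s a))) < LL.
Proof. intros. unfold LL. pose proof (maxlen_in _ _ (dH_out_in pre s a)). lia. Qed.

Definition tmdelta (q : nat) (a : Sym) (g : nat) : nat * Dir * nat * Dir * option bool :=
  let s := nat_to_st (q / LL) in
  let i := q mod LL in
  match dH pre s a with
  | (o, s', d) =>
    if i <? length o then (S q, DS, 0, DS, Some (nth i o false))
    else (st_to_nat s' * LL, d, 0, DS, None)
  end.

Definition tmhalt (q : nat) : bool := match nat_to_st (q / LL) with SHalt => true | _ => false end.

Definition TM := mkLTM (23 * LL) 1 0 tmhalt tmdelta.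

Lemma divmod : forall a i, i < LL -> (a * LL + i) / LL = a /\ (a * LL + i) mod LL = i.
Proof.
  intros a i Hi. assert (Hd : (a * LL + i) / LL = a).
  { rewrite Nat.div_add_l by apply LL_pos. rewrite Nat.div_small by lia. lia. }
  split; auto. pose proof (Nat.div_mod_eq (a * LL + i) LL). rewrite Hd in H. lia.
Qed.

Lemma TM_wf : wf_LTM TM.
Proof.
  unfold wf_LTM, TM; cbn [nQ nG q0 delta]. split; [lia|]. split; [pose proof LL_pos; lia|].
  intros q s g Hq Hg. unfold tmdelta.
  pose proof (Nat.div_mod_eq q LL) as Hdm.
  pose proof (Nat.mod_upper_bound q LL LL_pos) as Hm.
  assert (Hqd : q / LL < 23).
  { destruct (Nat.lt_ge_cases (q / LL) 23); auto.
    assert (LL * 23 <= LL * (q / LL)) by (apply Nat.mul_le_mono_l; auto). lia. }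
  pose proof (out_lt (nat_to_st (q / LL)) s) as Ho.
  destruct (dH pre (nat_to_st (q / LL)) s) as [[o s'] d] eqn:E. simpl in Ho.
  destruct (q mod LL <? length o) eqn:Ei.
  - apply Nat.ltb_lt in Ei. split; [|lia].
    assert (LL * (q / LL) <= LL * 22) by (apply Nat.mul_le_mono_l; lia). lia.
  - split; [|lia]. pose proof (st_bound s').
    assert (st_to_nat s' * LL <= 22 * LL) by (apply Nat.mul_le_mono_r; lia). pose proof LL_pos. lia.
Qed.

Lemma step_cj : forall w c, cj (step TM w c) = cj c.
Proof.
  intros w c. unfold step. destruct (halting TM (cq c)); auto.
  simpl. unfold tmdelta. destruct (dH pre _ _) as [[o s'] d].
  destruct (_ <? _); reflexivity.
Qed.

Lemma run_cj : forall w k, cj (run TM w k) = 0.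
Proof.
  intros w k. induction k; [reflexivity|].
  unfold run in *. simpl. rewrite step_cj. exact IHk.
Qed.


Lemma firstn_snoc : forall (o : list bool) i, i < length o -> firstn (S i) o = firstn i o ++ [nth i o false].
Proof.
  induction o; intros i Hi; simpl in *; [lia|].
  destruct i; [reflexivity|]. simpl. rewrite IHo by lia. reflexivity.
Qed.

Lemma halt_false : forall s i, s <> SHalt -> i < LL -> tmhalt (st_to_nat s * LL + i) = false.
Proof.
  intros s i Hs Hi. unfold tmhalt. destruct (divmod (st_to_nat s) i Hi) as [-> _].
  rewrite st_roundtrip. destruct s; congruence.
Qed.

Lemma emit : forall w s o s' d out pos, s <> SHalt -> dH pre s (read_in w pos) = (o, s', d) ->
  forall n i c, i + n = length o -> cq c = st_to_nat s * LL + i -> ci c = pos ->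
  cout c = out ++ firstn i o ->
  exists c', Nat.iter n (step TM w) c = c' /\ cq c' = st_to_nat s * LL + length o /\
    ci c' = pos /\ cout c' = out ++ o.
Proof.
  intros w s o s' d out pos Hs Hd n. induction n; intros i c Hn Hq Hi Ho.
  - exists c. simpl. repeat split; auto. rewrite Hq; f_equal; lia.
    rewrite Ho. rewrite firstn_all2 by lia. reflexivity.
  - assert (Hlo : i < length o) by lia.
    assert (Hlt : i < LL) by (pose proof (out_lt s (read_in w pos)) as HH; rewrite Hd in HH; simpl in HH; lia).
    destruct (divmod (st_to_nat s) i Hlt) as [Hdiv Hmod].
    rewrite Nat.iter_succ_r.
    assert (HS : cq (step TM w c) = S (cq c) /\ ci (step TM w c) = ci c /\
                 cout (step TM w c) = cout c ++ [nth i o false]).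
    { unfold step. cbn [halting delta TM]. rewrite Hq, halt_false by auto.
      unfold tmdelta. cbv beta zeta. rewrite Hdiv, Hmod, st_roundtrip, Hi, Hd.
      replace (i <? length o) with true by (symmetry; apply Nat.ltb_lt; auto).
      cbn [cq ci cout move_in]. auto. }
    destruct HS as [H1 [H2 H3]].
    apply (IHn (S i)); [lia| rewrite H1, Hq; lia | rewrite H2; auto |].
    rewrite H3, Ho, firstn_snoc by auto. rewrite app_assoc. reflexivity.
Qed.

Definition Inv (c : cfg) (s : st) (pos : nat) (out : list bool) :=
  cq c = st_to_nat s * LL /\ ci c = pos /\ cout c = out.

Lemma trans : forall w c s pos out o s' d, s <> SHalt -> Inv c s pos out ->
  dH pre s (read_in w pos) = (o, s', d) ->
  exists k, Inv (Nat.iter k (step TM w) c) s' (move_in (length w) pos d) (out ++ o).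
Proof.
  intros w c s pos out o s' d Hs [Hq [Hi Ho]] Hd.
  destruct (emit w s o s' d out pos Hs Hd (length o) 0 c ltac:(lia) ltac:(lia) Hi ltac:(rewrite Ho; simpl; rewrite app_nil_r; reflexivity))
    as [c' [Hc' [Hq' [Hi' Ho']]]].
  exists (S (length o)). rewrite Nat.iter_succ, Hc'.
  assert (Hlt : length o < LL) by (pose proof (out_lt s (read_in w pos)) as HH; rewrite Hd in HH; simpl in HH; lia).
  destruct (divmod (st_to_nat s) (length o) Hlt) as [Hdiv Hmod].
  unfold step. cbn [halting delta TM]. rewrite Hq', halt_false by auto.
  unfold tmdelta. cbv beta zeta. rewrite Hdiv, Hmod, st_roundtrip, Hi', Hd.
  replace (length o <? length o) with false by (symmetry; apply Nat.ltb_ge; lia).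
  unfold Inv; cbn [cq ci cout]. repeat split; auto. rewrite Ho', app_nil_r. reflexivity.
Qed.

Lemma halted : forall c : cfg, cq c = st_to_nat SHalt * LL -> tmhalt (cq c) = true.
Proof.
  intros c H. rewrite H. unfold tmhalt.
  destruct (divmod (st_to_nat SHalt) 0 ltac:(pose proof LL_pos; lia)) as [Hd _].
  rewrite Nat.add_0_r in Hd. rewrite Hd. reflexivity.
Qed.

Lemma read_mid : forall u b rest, read_in (u ++ b :: rest) (S (length u)) = Bit b.
Proof. intros. simpl. rewrite nth_error_app2 by lia. rewrite Nat.sub_diag. reflexivity. Qed.
Lemma read_end : forall u, read_in u (S (length u)) = REnd.
Proof. intros. simpl. replace (nth_error u (length u)) with (@None bool) by (symmetry; apply nth_error_None; lia). reflexivity. Qed.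

Lemma run_from : forall rest u c s out, s <> SHalt -> s <> SInit ->
  Inv c s (S (length u)) out ->
  exists k, tmhalt (cq (Nat.iter k (step TM (u ++ rest)) c)) = true /\
            cout (Nat.iter k (step TM (u ++ rest)) c) = out ++ O s rest.
Proof.
  induction rest as [|b rest IH]; intros u c s out Hs Hi HI.
  - rewrite app_nil_r.
    destruct (trans u c s _ out (endo s) SHalt DS Hs HI) as [k Hk].
    { rewrite read_end. destruct s; try congruence; reflexivity. }
    exists k. destruct Hk as [Hq [_ Ho]]. split; [apply halted; auto|]. rewrite Ho. reflexivity.
  - destruct (stepB s b) as [o s'] eqn:Eb.
    assert (Hd : dH pre s (read_in (u ++ b :: rest) (S (length u))) =
                 (o, s', match s' with SHalt => DS | _ => DR end)).
    { rewrite read_mid. destruct s; try congruence; cbn [dH]; rewrite Eb; reflexivity. }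
    destruct (trans _ c s _ out _ _ _ Hs HI Hd) as [k Hk].
    assert (HO : O s (b :: rest) = o ++ match s' with SHalt => [] | _ => O s' rest end).
    { simpl. rewrite Eb. reflexivity. }
    destruct (st_eq_dec s' SHalt) as [->|Hne].
    + exists k. destruct Hk as [Hq [_ Ho]]. split; [apply halted; auto|]. rewrite Ho, HO, app_nil_r. reflexivity.
    + assert (Hmv : move_in (length (u ++ b :: rest)) (S (length u))
                      (match s' with SHalt => DS | _ => DR end) = S (length (u ++ [b]))).
      { destruct s'; try congruence; cbn [move_in]; rewrite !length_app; cbn [length]; rewrite Nat.min_l; lia. }
      rewrite Hmv in Hk.
      assert (Hs'i : s' <> SInit).
      { intro; subst. destruct s; simpl in Eb; try congruence;
        repeat match goal with b : bool |- _ => destruct b end; unfold tagout in Eb; simpl in Eb; congruence. }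
      replace (u ++ b :: rest) with ((u ++ [b]) ++ rest) in * by (rewrite <- app_assoc; reflexivity).
      destruct (IH (u ++ [b]) _ s' (out ++ o) Hne Hs'i Hk) as [k2 [H1 H2]].
      exists (k2 + k). rewrite Nat.iter_add. split; auto. rewrite H2, HO, <- app_assoc.
      destruct s'; try congruence; reflexivity.
Qed.

Theorem TM_correct : forall w, exists k, halting TM (cq (run TM w k)) = true /\
  cout (run TM w k) = pre ++ O SStart w.
Proof.
  intros w.
  assert (HI0 : Inv (init_cfg TM) SInit 0 []) by (unfold Inv; simpl; repeat split).
  destruct (trans w _ SInit 0 [] pre SStart DR ltac:(congruence) HI0 ltac:(reflexivity)) as [k1 Hk1].
  assert (Hm : move_in (length w) 0 DR = S (length (@nil bool))) by (simpl; lia).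
  rewrite Hm in Hk1. simpl app in Hk1.
  destruct (run_from w [] _ SStart pre ltac:(congruence) ltac:(congruence) Hk1) as [k2 [H1 H2]].
  exists (k2 + k1). unfold run. rewrite Nat.iter_add. split; auto.
Qed.
End TM.

Definition pb (P : Prop) : bool := if excluded_middle_informative P then true else false.
Lemma pb_true : forall P, pb P = true <-> P.
Proof. intros P. unfold pb. destruct (excluded_middle_informative P); split; auto; discriminate. Qed.
Lemma pb_ext : forall P Q, (P <-> Q) -> pb P = pb Q.
Proof.
  intros P Q H. unfold pb. destruct (excluded_middle_informative P), (excluded_middle_informative Q); tauto.
Qed.

Definition trace_of (R : list nat -> Prop) (i : nat) : trace := fun n p => pb (R [i; n; p]).
Definition TeamR (R X : list nat -> Prop) (k : nat) : team :=
  fun t => exists i, X [i] /\ t = suffix (trace_of R i) k.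
Definition teq (T T' : team) := forall t, T t <-> T' t.

Lemma shift_ext : forall T T' k, teq T T' -> teq (team_shift T k) (team_shift T' k).
Proof. intros T T' k H t. unfold team_shift. split; intros [u [Hu ->]]; exists u; split; auto; apply H; auto. Qed.

Lemma teq_sym : forall T T', teq T T' -> teq T' T.
Proof. intros T T' H t; symmetry; apply H. Qed.

Lemma tsat_ext1 : forall phi T T', teq T T' -> tsat phi T -> tsat phi T'.
Proof.
  induction phi; intros T T' H Hs; simpl in *.
  - intros t Ht; apply Hs; apply H; auto.
  - intros t Ht; apply Hs; apply H; auto.
  - destruct Hs; split; eauto.
  - destruct Hs as [S [U [HU [H1 H2]]]]; exists S, U; split; auto; intros t; rewrite <- HU; symmetry; apply H.
  - eapply IHphi; [apply shift_ext, H|exact Hs].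
  - destruct Hs as [k Hk]; exists k; eapply IHphi; [apply shift_ext, H|exact Hk].
  - intros k; eapply IHphi; [apply shift_ext, H|apply Hs].
  - destruct Hs as [k [Hk Hj]]; exists k; split.
    + eapply IHphi2; [apply shift_ext, H|exact Hk].
    + intros j Hjk. eapply IHphi1; [apply shift_ext, H|exact (Hj j Hjk)].
  - intros k; destruct (Hs k) as [Hg|[j [Hj Hf]]].
    + left. eapply IHphi2; [apply shift_ext, H|exact Hg].
    + right. exists j. split; auto. eapply IHphi1; [apply shift_ext, H|exact Hf].
  - intro Hc; apply Hs. eapply IHphi; [apply teq_sym, H|exact Hc].
Qed.

Lemma tsat_ext : forall phi T T', teq T T' -> (tsat phi T <-> tsat phi T').
Proof. intros; split; apply tsat_ext1; auto using teq_sym. Qed.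

Lemma suffix_suffix : forall t a b, suffix (suffix t a) b = suffix t (a + b).
Proof. intros. unfold suffix. extensionality n. rewrite Nat.add_assoc. reflexivity. Qed.

Lemma shift_TeamR : forall R X k j, teq (team_shift (TeamR R X k) j) (TeamR R X (k + j)).
Proof.
  intros R X k j t. unfold team_shift, TeamR. split.
  - intros [u [[i [Hi ->]] ->]]. exists i. split; auto. apply suffix_suffix.
  - intros [i [Hi ->]]. exists (suffix (trace_of R i) k). split; [exists i; auto|]. symmetry; apply suffix_suffix.
Qed.

Lemma teval_numpos : forall e p, teval e (numpos p) = Pos.to_nat p.
Proof.
  intros e p. induction p; simpl; rewrite ?IHp.
  - rewrite Pos2Nat.inj_xI. lia.
  - rewrite Pos2Nat.inj_xO. lia.
  - reflexivity.
Qed.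
Lemma teval_num : forall e n, teval e (num n) = n.
Proof.
  intros e [|n]; [reflexivity|]. unfold num. rewrite teval_numpos. apply Nat2Pos.id. lia.
Qed.

Lemma tsat_TeamR_shift : forall phi R X k j,
  tsat phi (team_shift (TeamR R X k) j) <-> tsat phi (TeamR R X (k + j)).
Proof. intros. apply tsat_ext, shift_TeamR. Qed.

Lemma iff_cl : forall A B : Prop, ((~A \/ B) /\ (~B \/ A)) <-> (A <-> B).
Proof. intros A B. split; [tauto|]. intros H. destruct (classic A); tauto. Qed.

Lemma TeamR_eqX : forall R X Y k, (forall v, X [v] <-> Y [v]) -> teq (TeamR R X k) (TeamR R Y k).
Proof.
  intros R X Y k H t. unfold TeamR. split; intros [i [Hi ->]]; exists i; split; auto; apply H; auto.
Qed.

Lemma TeamR_single : forall R X k v, (forall v', X [v'] <-> v' = v) ->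
  teq (TeamR R X k) (singleton (suffix (trace_of R v) k)).
Proof.
  intros R X k v H t. unfold TeamR, singleton. split.
  - intros [i [Hi ->]]. apply H in Hi. subst. reflexivity.
  - intros ->. exists v. split; auto. apply H; reflexivity.
Qed.

Theorem tr_correct : forall phi e1 e2,
  sholds e1 e2 (tr phi) <-> tsat phi (TeamR (e2 0 3) (e2 0 1) (e1 0)).
Proof.
  induction phi; intros e1 e2.
  - simpl. setoid_rewrite teval_num. unfold upd1; simpl. split.
    + intros H t [i [Hi ->]]. destruct (H i) as [H1|H1]; [contradiction|].
      unfold suffix, trace_of. apply pb_true. rewrite Nat.add_0_r. exact H1.
    + intros H v. destruct (classic (e2 0 1 [v])) as [Hv|Hv]; [right|left; auto].
      specialize (H (suffix (trace_of (e2 0 3) v) (e1 0)) (ex_intro _ v (conj Hv eq_refl))).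
      unfold suffix, trace_of in H. rewrite pb_true in H. rewrite Nat.add_0_r in H. exact H.
  - simpl. setoid_rewrite IHphi. unfold upd1, upd2; simpl.
    set (R := e2 0 3). set (X := e2 0 1). set (k := e1 0). split.
    + intros H t [i [Hi ->]] Hs. destruct (H i) as [H1|H1]; [contradiction|]. apply H1.
      exists (fun l => l = [i]). split.
      * intros v0. apply iff_cl. split; intro E; [injection E; auto | subst; reflexivity].
      * eapply tsat_ext; [|exact Hs].
        refine (TeamR_single R _ k i _).
        intros v0; split; intro E; [injection E; auto|subst; reflexivity].
    + intros H v. destruct (classic (X [v])) as [Hv|Hv]; [right|left; auto].
      intros [X' [HX Hs]]. apply (H (suffix (trace_of R v) k)); [exists v; auto|].
      eapply tsat_ext; [|exact Hs]. refine (teq_sym _ _ (TeamR_single R _ k v _)). intros v0; apply iff_cl; apply HX.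
  - simpl. rewrite IHphi1, IHphi2. tauto.
  - simpl. setoid_rewrite IHphi1. setoid_rewrite IHphi2. unfold upd1, upd2; simpl.
    set (R := e2 0 3). set (X := e2 0 1). set (k := e1 0). split.
    + intros [Y [Z [HU [X1 [HX1 [[X2 [HX2 Hf]] Hg]]]]]].
      exists (TeamR R Y k), (TeamR R Z k). split; [|split].
      * intros t; split.
        -- intros [i [Hi ->]]. destruct (proj1 (proj1 (iff_cl _ _) (HU i)) Hi) as [H1|H1];
           [left|right]; exists i; auto.
        -- intros [[i [Hi ->]]|[i [Hi ->]]]; exists i; split; auto;
           apply (proj2 (proj1 (iff_cl _ _) (HU i))); auto.
      * refine (tsat_ext1 _ _ _ _ Hf). apply TeamR_eqX. intros v; apply iff_cl, HX2.
      * refine (tsat_ext1 _ _ _ _ Hg). apply TeamR_eqX. intros v; apply iff_cl, HX1.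
    + intros [S [U [HSU [Hf Hg]]]].
      set (Y := fun l => X l /\ S (suffix (trace_of R (hd 0 l)) k)).
      set (Z := fun l => X l /\ U (suffix (trace_of R (hd 0 l)) k)).
      exists Y, Z. split; [|exists Z; split; [|split; [exists Y; split|]]].
      * intros v. apply iff_cl. split.
        -- intros Hv. destruct (proj1 (HSU (suffix (trace_of R v) k)) (ex_intro _ v (conj Hv eq_refl)));
           [left|right]; split; auto.
        -- intros [[H1 _]|[H1 _]]; auto.
      * intros v. apply iff_cl. tauto.
      * intros v. apply iff_cl. tauto.
      * refine (tsat_ext1 _ _ _ _ Hf). intros t; split.
        -- intros Ht. destruct (proj2 (HSU t) (or_introl Ht)) as [i [Hi ->]].
           exists i. split; auto. split; auto.
        -- intros [i [[Hi HS] ->]]. exact HS.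
      * refine (tsat_ext1 _ _ _ _ Hg). intros t; split.
        -- intros Ht. destruct (proj2 (HSU t) (or_intror Ht)) as [i [Hi ->]].
           exists i. split; auto. split; auto.
        -- intros [i [[Hi HS] ->]]. exact HS.
  - simpl. setoid_rewrite IHphi. unfold upd1, upd2; simpl. rewrite tsat_TeamR_shift.
    split; [intros [? [-> [? [-> H]]]]; auto | intros H; eauto].
  - simpl. setoid_rewrite IHphi. unfold upd1, upd2; simpl. setoid_rewrite tsat_TeamR_shift.
    split; [intros [m [? [-> [? [-> H]]]]]; eauto | intros [m H]; exists m; eauto].
  - simpl. setoid_rewrite IHphi. unfold upd1, upd2; simpl. setoid_rewrite tsat_TeamR_shift.
    split; [intros H m; destruct (H m) as [? [-> [? [-> H1]]]]; auto | intros H m; eauto].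
  - simpl. setoid_rewrite IHphi1. setoid_rewrite IHphi2. unfold upd1, upd2; simpl.
    setoid_rewrite tsat_TeamR_shift. split.
    + intros [m [? [-> [? [-> [Hf Hg]]]]]]. exists m. split; auto.
      intros j Hj. destruct (Hf j) as [H1|[? [-> H1]]]; [lia|auto].
    + intros [m [Hg Hf]]. exists m, (e1 0). split; auto. exists (e1 0 + m). split; auto. split; auto.
      intros j. destruct (le_lt_dec m j); [left; lia|right; eauto].
  - simpl. setoid_rewrite IHphi1. setoid_rewrite IHphi2. unfold upd1, upd2; simpl.
    setoid_rewrite tsat_TeamR_shift. split.
    + intros H m. destruct (H m) as [? [-> [? [-> [[j [Hj [? [-> Hf]]]]|Hg]]]]]; [right|left; auto].
      exists j. split; [lia|auto].
    + intros H m. exists (e1 0). split; auto. exists (e1 0 + m). split; auto.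
      destruct (H m) as [Hg|[j [Hj Hf]]]; [right; auto|left]. exists j. split; [lia|eauto].
  - simpl. rewrite IHphi. tauto.
Qed.

Definition rB (B : nat) (t : trace) : trace := fun n p => t n p && (p <? B).
Definition img (r : trace -> trace) (T : team) : team := fun s => exists t, T t /\ s = r t.

Fixpoint atb (phi : ltl) : nat :=
  match phi with
  | LAtom p => S p
  | LNeg f | LX f | LF f | LG f | LTilde f => atb f
  | LAnd f g | LOr f g | LU f g | LR f g => Nat.max (atb f) (atb g)
  end.

Lemma img_shift : forall B T k, teq (team_shift (img (rB B) T) k) (img (rB B) (team_shift T k)).
Proof.
  intros B T k s. unfold team_shift, img. split.
  - intros [u [[t [Ht ->]] ->]]. exists (suffix t k). split; [exists t; auto|]. reflexivity.
  - intros [u [[t [Ht ->]] ->]]. exists (rB B t). split; [exists t; auto|]. reflexivity.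
Qed.

Lemma img_single : forall B t, teq (img (rB B) (singleton t)) (singleton (rB B t)).
Proof.
  intros B t s. unfold img, singleton. split; [intros [u [-> ->]]; auto | intros ->; exists t; auto].
Qed.

Lemma proj_correct : forall phi B T, atb phi <= B -> (tsat phi T <-> tsat phi (img (rB B) T)).
Proof.
  induction phi; intros B T Hb; simpl in Hb |- *.
  - split.
    + intros H s [t [Ht ->]]. unfold rB. rewrite (H t Ht). simpl. apply Nat.ltb_lt. lia.
    + intros H t Ht. specialize (H (rB B t) (ex_intro _ t (conj Ht eq_refl))).
      unfold rB in H. apply andb_true_iff in H. tauto.
  - split.
    + intros H s [t [Ht ->]] Hs. apply (H t Ht). apply (IHphi B); auto.
      exact (tsat_ext1 _ _ _ (teq_sym _ _ (img_single B t)) Hs).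
    + intros H t Ht Hs. apply (H (rB B t) (ex_intro _ t (conj Ht eq_refl))).
      apply (tsat_ext1 _ _ _ (img_single B t)). rewrite <- (IHphi B) by auto. exact Hs.
  - rewrite (IHphi1 B T), (IHphi2 B T) by lia. tauto.
  - split.
    + intros [S [U [HSU [Hf Hg]]]]. exists (img (rB B) S), (img (rB B) U). split; [|split].
      * intros s. unfold img. split.
        -- intros [t [Ht ->]]. destruct (proj1 (HSU t) Ht); [left|right]; eauto.
        -- intros [[t [Ht ->]]|[t [Ht ->]]]; exists t; split; auto; apply HSU; auto.
      * apply IHphi1; auto. lia.
      * apply IHphi2; auto. lia.
    + intros [S [U [HSU [Hf Hg]]]].
      exists (fun t => T t /\ S (rB B t)), (fun t => T t /\ U (rB B t)). split; [|split].
      * intros t. split.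
        -- intros Ht. destruct (proj1 (HSU (rB B t)) (ex_intro _ t (conj Ht eq_refl))); [left|right]; auto.
        -- intros [[H1 _]|[H1 _]]; auto.
      * apply (IHphi1 B); [lia|]. refine (tsat_ext1 _ _ _ _ Hf).
        intros s; unfold img; split.
        -- intros Hs. destruct (proj2 (HSU s) (or_introl Hs)) as [t [Ht ->]]. exists t; repeat split; auto.
        -- intros [t [[Ht HS] ->]]. exact HS.
      * apply (IHphi2 B); [lia|]. refine (tsat_ext1 _ _ _ _ Hg).
        intros s; unfold img; split.
        -- intros Hs. destruct (proj2 (HSU s) (or_intror Hs)) as [t [Ht ->]]. exists t; repeat split; auto.
        -- intros [t [[Ht HS] ->]]. exact HS.
  - rewrite (IHphi B) by auto. apply tsat_ext. exact (teq_sym _ _ (img_shift B T 1)).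
  - assert (Hs : forall k, tsat phi (team_shift T k) <-> tsat phi (team_shift (img (rB B) T) k))
      by (intro k; rewrite (IHphi B) by auto; apply tsat_ext; exact (teq_sym _ _ (img_shift B T k))).
    setoid_rewrite Hs. tauto.
  - assert (Hs : forall k, tsat phi (team_shift T k) <-> tsat phi (team_shift (img (rB B) T) k))
      by (intro k; rewrite (IHphi B) by auto; apply tsat_ext; exact (teq_sym _ _ (img_shift B T k))).
    setoid_rewrite Hs. tauto.
  - assert (Hs1 : forall k, tsat phi1 (team_shift T k) <-> tsat phi1 (team_shift (img (rB B) T) k))
      by (intro k; rewrite (IHphi1 B) by lia; apply tsat_ext; exact (teq_sym _ _ (img_shift B T k))).
    assert (Hs2 : forall k, tsat phi2 (team_shift T k) <-> tsat phi2 (team_shift (img (rB B) T) k))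
      by (intro k; rewrite (IHphi2 B) by lia; apply tsat_ext; exact (teq_sym _ _ (img_shift B T k))).
    setoid_rewrite Hs1. setoid_rewrite Hs2. tauto.
  - assert (Hs1 : forall k, tsat phi1 (team_shift T k) <-> tsat phi1 (team_shift (img (rB B) T) k))
      by (intro k; rewrite (IHphi1 B) by lia; apply tsat_ext; exact (teq_sym _ _ (img_shift B T k))).
    assert (Hs2 : forall k, tsat phi2 (team_shift T k) <-> tsat phi2 (team_shift (img (rB B) T) k))
      by (intro k; rewrite (IHphi2 B) by lia; apply tsat_ext; exact (teq_sym _ _ (img_shift B T k))).
    setoid_rewrite Hs1. setoid_rewrite Hs2. tauto.
  - rewrite (IHphi B T) by auto. tauto.
Qed.

Lemma rB_bounded : forall B t n p, rB B t n p = true -> p < B.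
Proof. intros B t n p H. unfold rB in H. apply andb_true_iff in H. destruct H as [_ H]. apply Nat.ltb_lt; auto. Qed.

Lemma rB_up : forall B t, ult_periodic t -> ult_periodic (rB B t).
Proof.
  intros B t [c [d [Hc [Hd H]]]]. exists c, d. split; auto. split; auto.
  intros n Hn. unfold rB. rewrite (H n Hn). reflexivity.
Qed.
Lemma rB_uc : forall B t, ult_constant t -> ult_constant (rB B t).
Proof. intros B t [i H]. exists i. intros n. unfold rB. rewrite (H n). reflexivity. Qed.

Lemma uc_up : forall t, ult_constant t -> ult_periodic t.
Proof.
  intros t [i H]. exists (S i), 1. split; [lia|]. split; [lia|]. intros n Hn.
  replace n with (i + (n - i)) by lia. rewrite H. replace (i + (n - i) + 1) with (i + (n - i + 1)) by lia.
  rewrite H. reflexivity.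
Qed.

Lemma bits_exist : forall M (f : nat -> bool), exists x, forall k, k < M -> Nat.testbit x k = f k.
Proof.
  induction M; intros f.
  - exists 0. intros; lia.
  - destruct (IHM (fun k => f (S k))) as [x Hx]. exists (2 * x + Nat.b2n (f 0)).
    intros [|k] Hk; [apply Nat.testbit_0_r|]. rewrite Nat.testbit_succ_r. apply Hx. lia.
Qed.

Definition idx (c d n : nat) := if n <? c then n else c + (n - c) mod d.

Definition genum (B i : nat) : trace :=
  let (c, x) := Cantor.of_nat i in
  let (d, tab) := Cantor.of_nat x in
  fun n p => if p <? B then Nat.testbit tab (idx c d n * B + p) else false.

Lemma periodic_mod : forall (t : trace) c d, 0 < d -> (forall n, c <= n -> t n = t (n + d)) ->
  forall m, t (c + m) = t (c + m mod d).
Proof.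
  intros t c d Hd H m. rewrite (Nat.div_mod_eq m d) at 1.
  generalize (m / d) as q. induction q.
  - rewrite Nat.mul_0_r. reflexivity.
  - rewrite <- IHq. replace (c + (d * S q + m mod d)) with ((c + (d * q + m mod d)) + d) by lia.
    symmetry. apply H. lia.
Qed.

Lemma genum_surj : forall B t, ult_periodic t -> (forall n p, t n p = true -> p < B) ->
  exists i, genum B i = t.
Proof.
  intros B t [c [d [Hc [Hd H]]]] Hb.
  destruct (bits_exist ((c + d) * B) (fun k => t (k / B) (k mod B))) as [x Hx].
  exists (Cantor.to_nat (c, Cantor.to_nat (d, x))).
  unfold genum. rewrite !Cantor.cancel_of_to.
  extensionality n. extensionality p.
  destruct (p <? B) eqn:Ep.
  - apply Nat.ltb_lt in Ep.
    assert (Hi : idx c d n < c + d).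
    { unfold idx. destruct (n <? c) eqn:E; [apply Nat.ltb_lt in E; lia|].
      pose proof (Nat.mod_upper_bound (n - c) d ltac:(lia)). lia. }
    rewrite Hx.
    2:{ assert (idx c d n * B + p < (idx c d n + 1) * B) by lia.
        assert ((idx c d n + 1) * B <= (c + d) * B) by (apply Nat.mul_le_mono_r; lia). lia. }
    assert (Hdiv : (idx c d n * B + p) / B = idx c d n).
    { rewrite Nat.div_add_l by lia. rewrite Nat.div_small by lia. lia. }
    assert (Hmod : (idx c d n * B + p) mod B = p).
    { pose proof (Nat.div_mod_eq (idx c d n * B + p) B). rewrite Hdiv in H0. lia. }
    rewrite Hdiv, Hmod. unfold idx.
    destruct (n <? c) eqn:E; [reflexivity|]. apply Nat.ltb_ge in E.
    rewrite <- (periodic_mod t c d Hd H (n - c)). replace (c + (n - c)) with n by lia. reflexivity.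
  - apply Nat.ltb_ge in Ep. destruct (t n p) eqn:E; auto. apply Hb in E. lia.
Qed.

Lemma pb_bool : forall b, pb (b = true) = b.
Proof. intros b. destruct b; [apply pb_true; auto|]. destruct (pb (false = true)) eqn:E; auto. rewrite pb_true in E. discriminate. Qed.

Lemma suffix0 : forall t, suffix t 0 = t.
Proof. intros t. reflexivity. Qed.

Definition Rof (f : nat -> trace) : list nat -> Prop :=
  fun l => match l with [i; n; p] => f i n p = true | _ => False end.
Lemma trace_of_Rof : forall f i, trace_of (Rof f) i = f i.
Proof. intros f i. unfold trace_of, Rof. extensionality n; extensionality p. apply pb_bool. Qed.

Definition Xof (P : nat -> Prop) : list nat -> Prop := fun l => match l with [i] => P i | _ => False end.

Theorem countsat_char : forall phi, CountSat phi <-> exists R X, tsat phi (TeamR R X 0).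
Proof.
  intros phi. split.
  - intros [T [[f Hf] Hs]]. exists (Rof f), (Xof (fun i => T (f i))).
    refine (tsat_ext1 _ _ _ _ Hs). intros t. split.
    + intros Ht. destruct (Hf t Ht) as [i <-]. exists i. split; [exact Ht|]. rewrite trace_of_Rof; reflexivity.
    + intros [i [Hi ->]]. simpl in Hi. rewrite suffix0, trace_of_Rof. exact Hi.
  - intros [R [X Hs]]. exists (TeamR R X 0). split; auto.
    exists (fun i => suffix (trace_of R i) 0). intros t [i [_ ->]]. eauto.
Qed.

Definition isC (C : trace -> Prop) := C = ult_periodic \/ C = ult_constant.

Lemma isC_rB : forall C B t, isC C -> C t -> C (rB B t).
Proof. intros C B t [->| ->]; [apply rB_up|apply rB_uc]. Qed.
Lemma isC_up : forall C t, isC C -> C t -> ult_periodic t.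
Proof. intros C t [->| ->]; auto using uc_up. Qed.

Theorem csat_char : forall C phi, isC C ->
  (CSat C phi <-> exists R X, (forall i, X [i] -> C (trace_of R i)) /\ tsat phi (TeamR R X 0)).
Proof.
  intros C phi HC. split.
  - intros [T Hs]. set (B := atb phi).
    rewrite (proj_correct phi B) in Hs by (unfold B; lia).
    set (T' := img (rB B) (fun t => T t /\ C t)) in *.
    exists (Rof (genum B)), (Xof (fun i => T' (genum B i))). split.
    + intros i Hi. simpl in Hi. rewrite trace_of_Rof. destruct Hi as [t [[_ Ht] ->]].
      apply isC_rB; auto.
    + refine (tsat_ext1 _ _ _ _ Hs). intros t. split.
      * intros Ht. destruct Ht as [t0 [[H0 H1] ->]] eqn:EE.
        destruct (genum_surj B (rB B t0)) as [i Hi].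
        { apply (isC_up C); auto. apply isC_rB; auto. }
        { apply rB_bounded. }
        exists i. split; [simpl; rewrite Hi; exact Ht|]. rewrite suffix0, trace_of_Rof. auto.
      * intros [i [Hi ->]]. simpl in Hi. rewrite suffix0, trace_of_Rof. exact Hi.
  - intros [R [X [HX Hs]]]. exists (TeamR R X 0).
    refine (tsat_ext1 _ _ _ _ Hs). intros t. split.
    + intros Ht. split; auto. destruct Ht as [i [Hi ->]]. rewrite suffix0. auto.
    + intros [Ht _]. exact Ht.
Qed.

Definition pathp (W root : nat) (Rel : nat -> nat -> Prop) (pi : nat -> nat) :=
  pi 0 = root /\ forall n, pi n < W /\ Rel (pi n) (pi (S n)).
Definition ktr (Eta : nat -> nat -> Prop) (pi : nat -> nat) : trace := fun n p => pb (Eta (pi n) p).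
Definition Wfp (W root : nat) (Rel Eta : nat -> nat -> Prop) :=
  0 < W /\ root < W /\ (forall w, w < W -> exists v, v < W /\ Rel w v) /\
  (exists B, forall w p, w < W -> Eta w p -> p < B).

Definition KCond (C : trace -> Prop) (R X : list nat -> Prop) (W root : nat) (Rel Eta : nat -> nat -> Prop) :=
  Wfp W root Rel Eta /\
  (forall i, X [i] -> (exists pi, pathp W root Rel pi /\ trace_of R i = ktr Eta pi) /\ C (trace_of R i)) /\
  (forall pi, pathp W root Rel pi -> C (ktr Eta pi) -> exists i, X [i] /\ trace_of R i = ktr Eta pi).

Theorem cfinsat_char : forall C phi, isC C ->
  (CFinSat C phi <-> exists R X W root Rel Eta, KCond C R X W root Rel Eta /\ tsat phi (TeamR R X 0)).
Proof.
  intros C phi HC. split.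
  - intros [K [HK Hs]]. destruct HK as [HW [Hr [Hser [B HB]]]].
    exists (Rof (genum B)), (Xof (fun i => teamK K (genum B i) /\ C (genum B i))),
      (kW K), (kroot K), (fun a b => kR K a b = true), (fun w p => keta K w p = true).
    assert (Hktr : forall pi, ktr (fun w p => keta K w p = true) pi = (fun n => keta K (pi n))).
    { intros pi. unfold ktr. extensionality n; extensionality p. apply pb_bool. }
    assert (Hsurj : forall t, teamK K t -> C t -> exists i, genum B i = t).
    { intros t [pi [[H0 Hp] ->]] Ht. apply genum_surj. apply (isC_up C); auto.
      intros n p Hnp. apply (HB (pi n)); auto. apply Hp. }
    split; [split; [|split]|].
    + repeat split; auto. exists B; auto.
    + intros i [[pi [Hpi Ht]] Hc]. split; [|rewrite trace_of_Rof; auto].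
      exists pi. split; [exact Hpi|]. rewrite trace_of_Rof, Hktr. exact Ht.
    + intros pi Hpi Hc. rewrite Hktr in Hc.
      destruct (Hsurj (fun n => keta K (pi n))) as [i Hi]; [exists pi; split; auto|auto|].
      exists i. split; [simpl; rewrite Hi; split; auto; exists pi; split; auto|].
      rewrite trace_of_Rof, Hktr. exact Hi.
    + refine (tsat_ext1 _ _ _ _ Hs). intros t. split.
      * intros [Ht Hc]. destruct (Hsurj t Ht Hc) as [i Hi]. exists i. split; [simpl; rewrite Hi; auto|].
        rewrite suffix0, trace_of_Rof. auto.
      * intros [i [Hi ->]]. simpl in Hi. rewrite suffix0, trace_of_Rof. exact Hi.
  - intros [R [X [W [root [Rel [Eta [[[HW [Hr [Hser [B HB]]]] [HA HBc]] Hs]]]]]]].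
    set (K := mkKripke W (fun a b => pb (Rel a b)) (fun w p => pb (Eta w p)) root).
    exists K. split.
    + unfold wf_kripke; simpl. split; auto. split; auto. split.
      * intros w Hw. destruct (Hser w Hw) as [v [Hv HR]]. exists v. split; auto. apply pb_true; auto.
      * exists B. intros w p Hw He. rewrite pb_true in He. eauto.
    + refine (tsat_ext1 _ _ _ _ Hs). intros t. split.
      * intros [i [Hi ->]]. rewrite suffix0. destruct (HA i Hi) as [[pi [[H0 Hp] Ht]] Hc]. split; auto.
        exists pi. split.
        -- split; auto. intros n; destruct (Hp n); split; simpl; auto. apply pb_true; auto.
        -- rewrite Ht. reflexivity.
      * intros [[pi [[H0 Hp] ->]] Hc].
        destruct (HBc pi) as [i [Hi Ht]].
        -- split; auto. intros n. destruct (Hp n) as [H1 H2]. simpl in *. split; auto. apply pb_true; auto.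
        -- exact Hc.
        -- exists i. split; auto; try (rewrite suffix0, Ht; reflexivity).
Qed.

Definition V := TVar.
Definition sImp a b := SOr (SNeg a) b.

Definition CFp (A : term -> term -> sform) :=
  SEx1 10 (SEx1 11 (SAnd (SLe TOne (V 10)) (SAnd (SLe TOne (V 11))
    (SAll1 12 (sImp (SLe (V 10) (V 12))
      (SAll1 13 (siff (A (V 12) (V 13)) (A (TAdd (V 12) (V 11)) (V 13))))))))).
Definition CFc (A : term -> term -> sform) :=
  SEx1 10 (SAll1 12 (SAll1 13 (siff (A (TAdd (V 10) (V 12)) (V 13)) (A (V 10) (V 13))))).

Definition tcl := term_closed [13; 12; 11; 10].

Definition Agood (A : term -> term -> sform) (e1 : nat -> nat) e2 (Asem : nat -> nat -> Prop) :=
  forall e1', (forall x, x < 10 -> e1' x = e1 x) -> forall tn tp, tcl tn -> tcl tp ->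
    (sholds e1' e2 (A tn tp) <-> Asem (teval e1' tn) (teval e1' tp)).

Definition tr_of (Asem : nat -> nat -> Prop) : trace := fun n p => pb (Asem n p).

Lemma tr_of_eq : forall Asem n m, tr_of Asem n = tr_of Asem m <-> forall p, Asem n p <-> Asem m p.
Proof.
  intros Asem n m. unfold tr_of. split.
  - intros H p. assert (E := f_equal (fun f => f p) H). simpl in E.
    split; intro Hp; [rewrite <- pb_true, <- E; apply pb_true; auto | rewrite <- pb_true, E; apply pb_true; auto].
  - intros H. extensionality p. apply pb_ext. apply H.
Qed.

Ltac upds := unfold upd1; simpl.

Lemma upd1_ne : forall e i v x, x <> i -> upd1 e i v x = e x.
Proof. intros e i v x H. unfold upd1. destruct (Nat.eqb_spec x i); congruence. Qed.

Ltac tclt := unfold tcl; simpl; repeat split; repeat (first [left; reflexivity | right]).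
Ltac agr := intros ?x ?Hx; repeat rewrite upd1_ne by lia; reflexivity.

Lemma tcl_V : forall x, In x [13; 12; 11; 10] -> tcl (V x).
Proof. intros x H. exact H. Qed.

Lemma CFp_sem : forall A e1 e2 Asem, Agood A e1 e2 Asem ->
  (sholds e1 e2 (CFp A) <-> ult_periodic (tr_of Asem)).
Proof.
  intros A e1 e2 Asem HA. unfold Agood in HA.
  assert (E : forall c d n p,
    (sholds (upd1 (upd1 (upd1 (upd1 e1 10 c) 11 d) 12 n) 13 p) e2 (A (V 12) (V 13)) <-> Asem n p) /\
    (sholds (upd1 (upd1 (upd1 (upd1 e1 10 c) 11 d) 12 n) 13 p) e2 (A (TAdd (V 12) (V 11)) (V 13))
       <-> Asem (n + d) p)).
  { intros c d n p. split; (rewrite HA; [| agr | tclt | tclt]); upds; reflexivity. }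
  unfold CFp, sImp, siff. cbn [sholds teval V]. unfold upd1 at 1 2 3 4 5 6 7 8; simpl.
  split.
  - intros [c [d [Hc [Hd H]]]].
    exists c, d. split; [lia|]. split; [lia|]. intros n Hn. apply tr_of_eq. intros p.
    destruct (H n) as [H1|H1]; [exfalso; apply H1; upds; lia|].
    specialize (H1 p). apply iff_cl in H1. destruct (E c d n p) as [E1 E2].
    rewrite <- E1, <- E2. exact H1.
  - intros [c [d [Hc [Hd H]]]]. exists c, d. split; [lia|]. split; [lia|].
    intros n. destruct (le_lt_dec c n) as [Hn|Hn]; [right|left; upds; lia].
    intros p. apply iff_cl. destruct (E c d n p) as [E1 E2].
    rewrite E1, E2. apply tr_of_eq. apply H. auto.
Qed.

Lemma CFc_sem : forall A e1 e2 Asem, Agood A e1 e2 Asem ->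
  (sholds e1 e2 (CFc A) <-> ult_constant (tr_of Asem)).
Proof.
  intros A e1 e2 Asem HA. unfold Agood in HA.
  assert (E : forall c n p,
    (sholds (upd1 (upd1 (upd1 e1 10 c) 12 n) 13 p) e2 (A (TAdd (V 10) (V 12)) (V 13)) <-> Asem (c + n) p) /\
    (sholds (upd1 (upd1 (upd1 e1 10 c) 12 n) 13 p) e2 (A (V 10) (V 13)) <-> Asem c p)).
  { intros c n p. split; (rewrite HA; [| agr | tclt | tclt]); upds; reflexivity. }
  unfold CFc, siff. cbn [sholds].
  split.
  - intros [c H]. exists c. intros n. apply tr_of_eq. intros p.
    specialize (H n p). apply iff_cl in H. destruct (E c n p) as [E1 E2].
    rewrite <- E1, <- E2. exact H.
  - intros [c H]. exists c. intros n p. apply iff_cl. destruct (E c n p) as [E1 E2].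
    rewrite E1, E2. apply tr_of_eq. apply H.
Qed.

Definition A1 (tn tp : term) := SMem 0 3 [V 1; tn; tp].
Definition A2 (tn tp : term) := SEx1 14 (SAnd (SMem 3 2 [tn; V 14]) (SMem 2 2 [V 14; tp])).

Lemma teval_upd_notin : forall B t e i v, term_closed B t -> ~ In i B -> teval (upd1 e i v) t = teval e t.
Proof.
  intros B t e i v. induction t; simpl; intros H Hi; try reflexivity.
  - unfold upd1. destruct (Nat.eqb_spec n i); [subst; contradiction|reflexivity].
  - rewrite IHt1, IHt2; tauto.
  - rewrite IHt1, IHt2; tauto.
Qed.

Lemma A1_good : forall e1 e2, Agood A1 e1 e2 (fun n p => e2 0 3 [e1 1; n; p]).
Proof.
  intros e1 e2 e1' He tn tp _ _. unfold A1. cbn [sholds map teval V]. rewrite He by lia. reflexivity.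
Qed.

Lemma A2_good : forall e1 e2, Agood A2 e1 e2 (fun n p => exists w, e2 3 2 [n; w] /\ e2 2 2 [w; p]).
Proof.
  intros e1 e2 e1' He tn tp Hn Hp. unfold A2. cbn [sholds map teval V].
  assert (E1 : forall v, teval (upd1 e1' 14 v) tn = teval e1' tn) by (intros; apply (teval_upd_notin _ tn e1' 14 _ Hn); simpl; lia).
  assert (E2 : forall v, teval (upd1 e1' 14 v) tp = teval e1' tp) by (intros; apply (teval_upd_notin _ tp e1' 14 _ Hp); simpl; lia).
  assert (E3 : forall v, upd1 e1' 14 v 14 = v) by (intros; unfold upd1; simpl; reflexivity).
  split; intros [v [H1 H2]]; exists v; rewrite ?E1, ?E2, ?E3 in *; auto.
Qed.

Definition CFok (CF : (term -> term -> sform) -> sform) (C : trace -> Prop) :=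
  forall A e1 e2 Asem, Agood A e1 e2 Asem -> (sholds e1 e2 (CF A) <-> C (tr_of Asem)).

Lemma CFp_ok : CFok CFp ult_periodic.
Proof. intros A e1 e2 Asem H. apply CFp_sem; auto. Qed.
Lemma CFc_ok : CFok CFc ult_constant.
Proof. intros A e1 e2 Asem H. apply CFc_sem; auto. Qed.

Lemma imp_cl : forall A B : Prop, (~A \/ B) <-> (A -> B).
Proof. intros A B. split; [tauto|]. intros H. destruct (classic A); tauto. Qed.

Definition lt_ a b := SLe (TAdd (V a) TOne) (V b).
Definition fRel a b := SMem 1 2 [V a; V b].
Definition fEta a b := SMem 2 2 [V a; V b].
Definition fPi a b := SMem 3 2 [a; b].

Definition fWf := SAnd (SLe TOne (V 6)) (SAnd (lt_ 7 6) (SAnd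
  (SAll1 8 (sImp (lt_ 8 6) (SEx1 9 (SAnd (lt_ 9 6) (fRel 8 9)))))
  (SEx1 8 (SAll1 9 (SAll1 10 (sImp (SAnd (lt_ 9 6) (fEta 9 10)) (lt_ 10 8))))))).

Lemma Wf_sem : forall e1 e2, sholds e1 e2 fWf <->
  Wfp (e1 6) (e1 7) (fun a b => e2 1 2 [a; b]) (fun a b => e2 2 2 [a; b]).
Proof.
  intros e1 e2. unfold fWf, lt_, fRel, fEta, sImp, Wfp. cbn [sholds map teval V]. upds.
  setoid_rewrite imp_cl. split.
  - intros [H1 [H2 [H3 [B H4]]]]. split; [lia|]. split; [lia|]. split.
    + intros w Hw. destruct (H3 w ltac:(lia)) as [v [Hv HR]]. exists v. split; [lia|auto].
    + exists B. intros w p Hw He. specialize (H4 w p ltac:(split; [lia|auto])). lia.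
  - intros [H1 [H2 [H3 [B H4]]]]. split; [lia|]. split; [lia|]. split.
    + intros w Hw. destruct (H3 w ltac:(lia)) as [v [Hv HR]]. exists v. split; [lia|auto].
    + exists B. intros w p [Hw He]. specialize (H4 w p ltac:(lia) He). lia.
Qed.

Definition fPath := SAnd (SAll1 8 (SEx1 9 (fPi (V 8) (V 9))))
  (SAnd (SAll1 8 (SAll1 9 (SAll1 10 (sImp (SAnd (fPi (V 8) (V 9)) (fPi (V 8) (V 10))) (SEq (V 9) (V 10))))))
  (SAnd (fPi TZero (V 7))
        (SAll1 8 (SAll1 9 (sImp (fPi (V 8) (V 9))
           (SAnd (lt_ 9 6) (SEx1 10 (SAnd (fPi (TAdd (V 8) TOne) (V 10)) (fRel 9 10))))))))).

Definition graph (pi : nat -> nat) : list nat -> Prop :=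
  fun l => match l with [n; w] => pi n = w | _ => False end.

Lemma Path_sem : forall e1 e2, sholds e1 e2 fPath <->
  exists pi, pathp (e1 6) (e1 7) (fun a b => e2 1 2 [a; b]) pi /\ forall n w, e2 3 2 [n; w] <-> pi n = w.
Proof.
  intros e1 e2. unfold fPath, lt_, fRel, fPi, sImp, pathp. cbn [sholds map teval V]. upds.
  setoid_rewrite imp_cl. split.
  - intros [Htot [Hfun [H0 Hstep]]].
    set (pi := fun n => proj1_sig (constructive_indefinite_description _ (Htot n))).
    assert (Hpi : forall n, e2 3 2 [n; pi n]) by (intros n; exact (proj2_sig (constructive_indefinite_description _ (Htot n)))).
    assert (Hg : forall n w, e2 3 2 [n; w] <-> pi n = w).
    { intros n w. split; [intros H; apply (Hfun n); auto | intros <-; auto]. }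
    exists pi. split; [|exact Hg]. split.
    + apply Hg; exact H0.
    + intros n. destruct (Hstep n (pi n) (Hpi n)) as [Hlt [v [Hv HR]]].
      split; [lia|]. replace (n + 1) with (S n) in Hv by lia. apply Hg in Hv. subst v. exact HR.
  - intros [pi [[H0 Hp] Hg]]. split; [|split; [|split]].
    + intros n. exists (pi n). apply Hg. reflexivity.
    + intros n a b [Ha Hb]. apply Hg in Ha, Hb. congruence.
    + apply Hg. exact H0.
    + intros n w Hw. apply Hg in Hw. subst w. destruct (Hp n) as [Hlt HR]. split; [lia|].
      exists (pi (S n)). split; auto. apply Hg. f_equal. lia.
Qed.

Definition fTrEq := SAll1 8 (SAll1 9 (siff (SMem 0 3 [V 1; V 8; V 9])
  (SEx1 10 (SAnd (fPi (V 8) (V 10)) (fEta 10 9))))).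

Lemma TrEq_sem : forall e1 e2 pi, (forall n w, e2 3 2 [n; w] <-> pi n = w) ->
  (sholds e1 e2 fTrEq <-> trace_of (e2 0 3) (e1 1) = ktr (fun a b => e2 2 2 [a; b]) pi).
Proof.
  intros e1 e2 pi Hg. unfold fTrEq, fPi, fEta, siff. cbn [sholds map teval V]. upds.
  setoid_rewrite iff_cl. unfold trace_of, ktr. split.
  - intros H. extensionality n; extensionality p. apply pb_ext. rewrite (H n p). split.
    + intros [w [Hw He]]. apply Hg in Hw. subst; auto.
    + intros He. exists (pi n). split; auto. apply Hg; auto.
  - intros H n p. assert (E := f_equal (fun f => f n p) H). simpl in E.
    split.
    + intros HR. assert (HE : e2 2 2 [pi n; p]) by (rewrite <- pb_true, <- E; apply pb_true; auto).
      exists (pi n). split; auto. apply Hg; auto.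
    + intros [w [Hw He]]. apply Hg in Hw. subst w. rewrite <- pb_true, E. apply pb_true; auto.
Qed.

Definition CondA CF := SAll1 1 (sImp (memX 1) (SAnd (SEx2 3 2 (SAnd fPath fTrEq)) (CF A1))).
Definition CondB CF := SAll2 3 2 (sImp fPath (sImp (CF A2) (SEx1 1 (SAnd (memX 1) fTrEq)))).

Lemma upd2_ne : forall e j n X j' n', (j' <> j \/ n' <> n) -> upd2 e j n X j' n' = e j' n'.
Proof.
  intros e j n X j' n' H. unfold upd2.
  destruct (Nat.eqb_spec j' j), (Nat.eqb_spec n' n); simpl; auto; tauto.
Qed.
Lemma upd2_eq : forall e j n X, upd2 e j n X j n = X.
Proof. intros. unfold upd2. rewrite !Nat.eqb_refl. reflexivity. Qed.
Lemma upd1_eq : forall e i v, upd1 e i v i = v.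
Proof. intros. unfold upd1. rewrite Nat.eqb_refl. reflexivity. Qed.

Lemma CondA_sem : forall CF C, CFok CF C -> forall e1 e2,
  sholds e1 e2 (CondA CF) <->
  forall i, e2 0 1 [i] -> (exists pi, pathp (e1 6) (e1 7) (fun a b => e2 1 2 [a; b]) pi /\
      trace_of (e2 0 3) i = ktr (fun a b => e2 2 2 [a; b]) pi) /\ C (trace_of (e2 0 3) i).
Proof.
  intros CF C Hok e1 e2. unfold CondA, sImp, memX. cbn [sholds map teval].
  assert (HC : forall i, sholds (upd1 e1 1 i) e2 (CF A1) <-> C (trace_of (e2 0 3) i)).
  { intros i. rewrite (Hok A1 _ e2 _ (A1_good (upd1 e1 1 i) e2)). rewrite upd1_eq. reflexivity. }
  assert (HP : forall i, (exists X, sholds (upd1 e1 1 i) (upd2 e2 3 2 X) (SAnd fPath fTrEq)) <->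
     (exists pi, pathp (e1 6) (e1 7) (fun a b => e2 1 2 [a; b]) pi /\
      trace_of (e2 0 3) i = ktr (fun a b => e2 2 2 [a; b]) pi)).
  { intros i. cbn [sholds]. split.
    - intros [X [HPa HT]]. apply Path_sem in HPa. destruct HPa as [pi [Hpi Hg]].
      rewrite upd2_eq in Hg. rewrite (TrEq_sem _ _ pi) in HT by (rewrite upd2_eq; exact Hg).
      rewrite !upd2_ne in HT by lia. rewrite upd1_eq in HT.
      rewrite !upd1_ne in Hpi by lia. rewrite upd2_ne in Hpi by lia.
      exists pi. split; auto.
    - intros [pi [Hpi Ht]]. exists (graph pi). split.
      + apply Path_sem. exists pi. rewrite !upd1_ne by lia. rewrite upd2_ne by lia. split; auto.
        intros n w. rewrite upd2_eq. simpl. reflexivity.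
      + rewrite (TrEq_sem _ _ pi) by (intros n w; rewrite upd2_eq; simpl; reflexivity).
        rewrite !upd2_ne by lia. rewrite upd1_eq. exact Ht. }
  unfold upd1 at 1. simpl. split.
  - intros H i Hi. destruct (H i) as [H1|[H1 H2]]; [contradiction|]. split; [apply HP; auto|apply HC; auto].
  - intros H i. destruct (classic (e2 0 1 [i])) as [Hi|Hi]; [right|left; auto].
    destruct (H i Hi). split; [apply HP; auto|apply HC; auto].
Qed.

Lemma CondB_sem : forall CF C, CFok CF C -> forall e1 e2,
  sholds e1 e2 (CondB CF) <->
  forall pi, pathp (e1 6) (e1 7) (fun a b => e2 1 2 [a; b]) pi -> C (ktr (fun a b => e2 2 2 [a; b]) pi) ->
    exists i, e2 0 1 [i] /\ trace_of (e2 0 3) i = ktr (fun a b => e2 2 2 [a; b]) pi.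
Proof.
  intros CF C Hok e1 e2. unfold CondB, sImp, memX. cbn [sholds map teval].
  assert (HG : forall X pi, (forall n w, X [n; w] <-> pi n = w) ->
     (sholds e1 (upd2 e2 3 2 X) (CF A2) <-> C (ktr (fun a b => e2 2 2 [a; b]) pi)) /\
     ((exists v, sholds (upd1 e1 1 v) (upd2 e2 3 2 X) (SAnd (SMem 0 1 [V 1]) fTrEq)) <->
      exists i, e2 0 1 [i] /\ trace_of (e2 0 3) i = ktr (fun a b => e2 2 2 [a; b]) pi)).
  { intros X pi Hg. split.
    - rewrite (Hok A2 _ _ _ (A2_good e1 (upd2 e2 3 2 X))). rewrite upd2_eq, upd2_ne by lia.
      assert (E : tr_of (fun n p => exists w, X [n; w] /\ e2 2 2 [w; p]) = ktr (fun a b => e2 2 2 [a; b]) pi).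
      { unfold tr_of, ktr. extensionality n; extensionality p. apply pb_ext. split.
        - intros [w [Hw He]]. apply Hg in Hw. subst; auto.
        - intros He. exists (pi n). split; auto. apply Hg; auto. }
      rewrite E. reflexivity.
    - cbn [sholds map teval V]. split.
      + intros [v [Hv HT]]. rewrite (TrEq_sem _ _ pi) in HT by (rewrite upd2_eq; exact Hg).
        rewrite !upd2_ne in HT by lia. rewrite upd1_eq in HT. rewrite upd2_ne in Hv by lia.
        rewrite upd1_eq in Hv. exists v. split; auto.
      + intros [i [Hi Ht]]. exists i. rewrite upd2_ne by lia. rewrite upd1_eq. split; auto.
        rewrite (TrEq_sem _ _ pi) by (rewrite upd2_eq; exact Hg).
        rewrite !upd2_ne by lia. rewrite upd1_eq. exact Ht. }
  split.
  - intros H pi Hpi Hc. destruct (H (graph pi)) as [H1|[H1|H1]].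
    + exfalso. apply H1. apply Path_sem. exists pi. rewrite upd2_ne by lia. split; auto.
      intros n w. rewrite upd2_eq. simpl. reflexivity.
    + exfalso. apply H1. apply (HG (graph pi) pi); auto. intros n w; simpl; reflexivity.
    + apply (HG (graph pi) pi); auto. intros n w; simpl; reflexivity.
  - intros H X. destruct (classic (sholds e1 (upd2 e2 3 2 X) fPath)) as [HP|HP]; [right|left; auto].
    pose proof HP as HP'. apply Path_sem in HP'. destruct HP' as [pi [Hpi Hg]].
    rewrite upd2_eq in Hg. rewrite upd2_ne in Hpi by lia.
    destruct (HG X pi Hg) as [HG1 HG2].
    destruct (classic (C (ktr (fun a b => e2 2 2 [a; b]) pi))) as [Hc|Hc]; [right|left; rewrite HG1; auto].
    apply HG2. apply H; auto.
Qed.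

Definition e10 : nat -> nat := fun _ => 0.
Definition e20 : nat -> nat -> list nat -> Prop := fun _ _ _ => False.

Theorem reduction_generic : forall (P : ltl -> Prop) (pre : list bool) (W : sform -> sform),
  (forall h, enc_sform (W h) = pre ++ enc_sform h) ->
  (forall s F, DF (pre ++ s) F [] -> exists a, DF s a [] /\ F = W a) ->
  (forall phi, sclosed [] [] (W (tr phi))) ->
  (forall phi, sholds e10 e20 (W (tr phi)) <-> P phi) ->
  logspace_reducible (lang_ltl P) (lang_sform Delta20).
Proof.
  intros P pre W Henc Hdec Hcl Hsem.
  exists (fun w => pre ++ O SStart w). split.
  - exists (TM pre), 0. split; [apply TM_wf|]. intros w. split.
    + apply TM_correct.
    + intros k. rewrite run_cj. lia.
  - intros w. split.
    + intros [phi [-> HP]]. exists (W (tr phi)). split.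
      * rewrite Henc. rewrite <- (app_nil_r (enc_ltl phi)), O_enc. simpl. rewrite app_nil_r. reflexivity.
      * split; [apply Hcl|]. apply Hsem; auto.
    + intros [F [HF [Hc Hs]]].
      assert (HD : DF (pre ++ O SStart w) F []).
      { rewrite HF. exists (fsize F). rewrite <- (app_nil_r (enc_sform F)). apply dec_form_enc. lia. }
      destruct (Hdec _ _ HD) as [a [Ha ->]].
      assert (HDs : DFs 1 (O SStart w) [a] []).
      { apply (DFs_S_intro _ _ _ _ _ _ Ha). exists 0. reflexivity. }
      destruct (main_inv _ w (le_n _) _ _ HDs) as [phis [-> Hm]].
      destruct phis as [|phi [|]]; try discriminate. injection Hm; intros ->.
      exists phi. split; [simpl; rewrite app_nil_r; reflexivity|]. apply Hsem. exact Hs.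
Qed.

Ltac inl := simpl; repeat (first [left; reflexivity | right]); try assumption.

Lemma numpos_closed : forall B p, term_closed B (numpos p).
Proof. intros B p; induction p; simpl; tauto. Qed.
Lemma num_closed : forall B n, term_closed B (num n).
Proof. intros B [|n]; simpl; [exact I|]. apply numpos_closed. Qed.

Ltac clos := repeat (cbn [sclosed term_closed length]; match goal with
  | |- _ /\ _ => split
  | |- Forall _ [] => constructor
  | |- Forall _ (_ :: _) => constructor
  | |- True => exact I
  | |- ?x = ?x => reflexivity
  | |- In _ _ => solve [inl]
  | |- _ \/ _ => solve [repeat (first [left; reflexivity | right]); assumption]
  | |- term_closed _ (num _) => apply num_closed
  end).

Lemma tr_closed : forall phi B1 B2, In 0 B1 -> In (0, 1) B2 -> In (0, 3) B2 -> sclosed B1 B2 (tr phi).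
Proof.
  induction phi; intros B1 B2 H0 H1 H3; simpl; clos;
  try (apply IHphi; solve [inl]); try (apply IHphi1; solve [inl]); try (apply IHphi2; solve [inl]).
Qed.

Definition kz h := SEx1 0 (SAnd (SEq (V 0) TZero) h).
Definition kzfrag := tag 6 ++ enc_nat 0 ++ tag 4 ++ enc_sform (SEq (V 0) TZero).
Definition WC h := SEx2 0 3 (SEx2 0 1 (kz h)).
Definition fWC := tag 8 ++ enc_nat 0 ++ enc_nat 3 ++ tag 8 ++ enc_nat 0 ++ enc_nat 1 ++ kzfrag.
Definition CondS CF := SAll1 1 (sImp (memX 1) (CF A1)).
Definition WS CF h := SEx2 0 3 (SEx2 0 1 (SAnd (CondS CF) (kz h))).
Definition fWS CF := tag 8 ++ enc_nat 0 ++ enc_nat 3 ++ tag 8 ++ enc_nat 0 ++ enc_nat 1 ++ tag 4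
  ++ enc_sform (CondS CF) ++ kzfrag.
Definition WK CF h := SEx2 0 3 (SEx2 0 1 (SEx1 6 (SEx1 7 (SEx2 1 2 (SEx2 2 2
  (SAnd fWf (SAnd (CondA CF) (SAnd (CondB CF) (kz h))))))))).
Definition fWK CF := tag 8 ++ enc_nat 0 ++ enc_nat 3 ++ tag 8 ++ enc_nat 0 ++ enc_nat 1 ++ tag 6
  ++ enc_nat 6 ++ tag 6 ++ enc_nat 7 ++ tag 8 ++ enc_nat 1 ++ enc_nat 2 ++ tag 8 ++ enc_nat 2
  ++ enc_nat 2 ++ tag 4 ++ enc_sform fWf ++ tag 4 ++ enc_sform (CondA CF) ++ tag 4
  ++ enc_sform (CondB CF) ++ kzfrag.

Lemma enc_WC : forall h, enc_sform (WC h) = fWC ++ enc_sform h.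
Proof. intros h. unfold fWC, kzfrag. encsolve. Qed.
Lemma enc_WS : forall CF h, enc_sform (WS CF h) = fWS CF ++ enc_sform h.
Proof. intros CF h. unfold fWS, kzfrag, WS, kz. cbn [enc_sform]. repeat rewrite <- app_assoc. reflexivity. Qed.
Lemma enc_WK : forall CF h, enc_sform (WK CF h) = fWK CF ++ enc_sform h.
Proof. intros CF h. unfold fWK, kzfrag, WK, kz. cbn [enc_sform]. repeat rewrite <- app_assoc. reflexivity. Qed.

Lemma dec_WC : forall s F, DF (fWC ++ s) F [] -> exists a, DF s a [] /\ F = WC a.
Proof. unfold fWC, kzfrag. intros s F H; repeat rewrite <- app_assoc in H; repeat dstep; eauto. Qed.
Lemma dec_WS : forall CF s F, DF (fWS CF ++ s) F [] -> exists a, DF s a [] /\ F = WS CF a.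
Proof. intros CF. unfold fWS, kzfrag. intros s F H; repeat rewrite <- app_assoc in H; repeat dstep; eauto. Qed.
Lemma dec_WK : forall CF s F, DF (fWK CF ++ s) F [] -> exists a, DF s a [] /\ F = WK CF a.
Proof. intros CF. unfold fWK, kzfrag. intros s F H; repeat rewrite <- app_assoc in H; repeat dstep; eauto. Qed.

Lemma kz_sem : forall e1 e2 phi, sholds e1 e2 (kz (tr phi)) <-> tsat phi (TeamR (e2 0 3) (e2 0 1) 0).
Proof.
  intros e1 e2 phi. unfold kz. cbn [sholds teval V]. split.
  - intros [v [Hv Hs]]. rewrite upd1_eq in Hv. subst v. rewrite tr_correct in Hs. rewrite upd1_eq in Hs. exact Hs.
  - intros Hs. exists 0. rewrite upd1_eq. split; auto. rewrite tr_correct, upd1_eq. exact Hs.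
Qed.

Lemma WC_sem : forall phi, sholds e10 e20 (WC (tr phi)) <-> CountSat phi.
Proof.
  intros phi. rewrite countsat_char. unfold WC. cbn [sholds]. setoid_rewrite kz_sem.
  unfold upd2; simpl. tauto.
Qed.

Lemma CondS_sem : forall CF C, CFok CF C -> forall e1 e2,
  sholds e1 e2 (CondS CF) <-> forall i, e2 0 1 [i] -> C (trace_of (e2 0 3) i).
Proof.
  intros CF C Hok e1 e2. unfold CondS, sImp, memX. cbn [sholds map teval].
  assert (HC : forall i, sholds (upd1 e1 1 i) e2 (CF A1) <-> C (trace_of (e2 0 3) i)).
  { intros i. rewrite (Hok A1 _ e2 _ (A1_good (upd1 e1 1 i) e2)). rewrite upd1_eq. reflexivity. }
  split.
  - intros H i Hi. destruct (H i) as [H1|H1]; [rewrite upd1_eq in H1; contradiction|]. apply HC; auto.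
  - intros H i. rewrite upd1_eq. destruct (classic (e2 0 1 [i])) as [Hi|Hi]; [right|left; auto].
    apply HC; auto.
Qed.

Lemma WS_sem : forall CF C, CFok CF C -> isC C -> forall phi,
  sholds e10 e20 (WS CF (tr phi)) <-> CSat C phi.
Proof.
  intros CF C Hok HC phi. rewrite csat_char by auto. unfold WS. cbn [sholds].
  setoid_rewrite kz_sem. setoid_rewrite (CondS_sem CF C Hok).
  unfold upd2; simpl. tauto.
Qed.

Lemma WK_sem : forall CF C, CFok CF C -> isC C -> forall phi,
  sholds e10 e20 (WK CF (tr phi)) <-> CFinSat C phi.
Proof.
  intros CF C Hok HC phi. rewrite cfinsat_char by auto. unfold WK. cbn [sholds].
  setoid_rewrite kz_sem. setoid_rewrite (CondA_sem CF C Hok). setoid_rewrite (CondB_sem CF C Hok).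
  setoid_rewrite Wf_sem. unfold upd2, upd1; simpl. unfold KCond. split.
  - intros [R [X [W [root [Rel [Eta [H1 [H2 [H3 H4]]]]]]]]].
    exists R, X, W, root, (fun a b => Rel [a; b]), (fun a b => Eta [a; b]). tauto.
  - intros [R [X [W [root [Rel [Eta [[H1 [H2 H3]] H4]]]]]]].
    exists R, X, W, root, (fun l => match l with [a; b] => Rel a b | _ => False end),
      (fun l => match l with [a; b] => Eta a b | _ => False end). tauto.
Qed.

Ltac clos2 := repeat (cbn [sclosed term_closed length]; match goal with
  | |- _ /\ _ => split
  | |- Forall _ [] => constructor
  | |- Forall _ (_ :: _) => constructor
  | |- True => exact I
  | |- ?x = ?x => reflexivity
  | |- In _ _ => solve [inl]
  | |- _ \/ _ => solve [repeat (first [left; reflexivity | right]); assumption]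
  | |- sclosed _ _ (tr _) => apply tr_closed; solve [inl]
  end).

Ltac unf := unfold WC, WS, WK, kz, CondS, CondA, CondB, CFp, CFc, A1, A2, fWf, fPath, fTrEq;
  unfold lt_, fRel, fEta, fPi, sImp, memX, siff, V.

Lemma WC_closed : forall phi, sclosed [] [] (WC (tr phi)).
Proof. intros phi. unf. clos2. Qed.
Lemma WSp_closed : forall phi, sclosed [] [] (WS CFp (tr phi)).
Proof. intros phi. unf. clos2. Qed.
Lemma WSc_closed : forall phi, sclosed [] [] (WS CFc (tr phi)).
Proof. intros phi. unf. clos2. Qed.
Lemma WKp_closed : forall phi, sclosed [] [] (WK CFp (tr phi)).
Proof. intros phi. unf. clos2. Qed.
Lemma WKc_closed : forall phi, sclosed [] [] (WK CFc (tr phi)).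
Proof. intros phi. unf. clos2. Qed.

Theorem mainTheorem12 :
  forall C : trace -> Prop,
    (C = ult_periodic \/ C = ult_constant) ->
    logspace_reducible (lang_ltl CountSat) (lang_sform Delta20) /\
    logspace_reducible (lang_ltl (CSat C)) (lang_sform Delta20) /\
    logspace_reducible (lang_ltl (CFinSat C)) (lang_sform Delta20).
Proof.
  intros C HC.
  split; [exact (reduction_generic CountSat fWC WC enc_WC dec_WC WC_closed WC_sem)|].
  destruct HC as [-> | ->]; split.
  - exact (reduction_generic _ (fWS CFp) (WS CFp) (enc_WS CFp) (dec_WS CFp) WSp_closed
      (WS_sem CFp _ CFp_ok (or_introl eq_refl))).
  - exact (reduction_generic _ (fWK CFp) (WK CFp) (enc_WK CFp) (dec_WK CFp) WKp_closed
      (WK_sem CFp _ CFp_ok (or_introl eq_refl))).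
  - exact (reduction_generic _ (fWS CFc) (WS CFc) (enc_WS CFc) (dec_WS CFc) WSc_closed
      (WS_sem CFc _ CFc_ok (or_intror eq_refl))).
  - exact (reduction_generic _ (fWK CFc) (WK CFc) (enc_WK CFc) (dec_WK CFc) WKc_closed
      (WK_sem CFc _ CFc_ok (or_intror eq_refl))).
Qed.
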